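(* Let $(n,m)\in\{(3,3),(4,3),(5,3),(3,4),(3,5)\}$. Then $H_1(\mathcal{N}_n(\sigma_1^m);\mathbb{Z})$ is torsion free of finite rank, namely free abelian of rank $4$ if $(n,m)=(3,3)$, rank $6$ if $(n,m)=(3,4)$, rank $12$ if $(n,m)=(3,5)$, rank $12$ if $(n,m)=(4,3)$, and rank $40$ if $(n,m)=(5,3)$.
   Context: $B_n$ denotes the Artin braid group with standard generators $\sigma_1,\dots,\sigma_{n-1}$ (relations $\sigma_i\sigma_j=\sigma_j\sigma_i$ for $|i-j|>1$ and $\sigma_i\sigma_j\sigma_i=\sigma_j\sigma_i\sigma_j$ for $|i-j|=1$), and $\mathcal{N}_n(\sigma_1^m)$ denotes the normal closure of $\sigma_1^m$ in $B_n$. $H_1(G;\mathbb{Z})$ is the abelianization of $G$. *)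

(* Defs.v *)
(* Braid groups given by their standard presentation,
   elements represented by words modulo the congruence generated by the
   relators. *)
From HB Require Import structures.
From mathcomp Require Import all_boot all_order all_algebra.
From Stdlib Require Import Relations.
Set Implicit Arguments. Unset Strict Implicit. Unset Printing Implicit Defensive.
Import GRing.Theory.
Local Open Scope ring_scope.

(* A letter (i, true) is sigma_{i+1}, (i, false) is sigma_{i+1}^{-1};
   so sigma_1 is index 0, and B_n uses indices 0 .. n-2. *)
Definition letter := (nat * bool)%type.
Definition word := seq letter.

Definition valid_word (n : nat) (w : word) : bool :=
  all (fun x : letter => (x.1 < n.-1)%N) w.

Definition inv_word (w : word) : word :=
  rev (map (fun x : letter => (x.1, ~~ x.2)) w).

Inductive braid_rel (n : nat) : word -> word -> Prop :=
| br_free i b : (i < n.-1)%N -> braid_rel n [:: (i, b); (i, ~~ b)] [::]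
| br_comm i j : (i.+1 < j)%N -> (j < n.-1)%N ->
    braid_rel n [:: (i, true); (j, true)] [:: (j, true); (i, true)]
| br_braid i : (i.+1 < n.-1)%N ->
    braid_rel n [:: (i, true); (i.+1, true); (i, true)]
                [:: (i.+1, true); (i, true); (i.+1, true)].

Inductive braid_step (n : nat) : word -> word -> Prop :=
| bs_rel u v l r : braid_rel n l r -> braid_step n (u ++ l ++ v) (u ++ r ++ v).

Definition braid_eq (n : nat) : word -> word -> Prop :=
  clos_refl_sym_trans word (braid_step n).

Definition sigma1_pow (m : nat) (b : bool) : word := nseq m (0%N, b).

Definition in_normal_closure (n m : nat) (w : word) : Prop :=
  valid_word n w /\
  exists gs : seq (word * bool),
    all (fun p => valid_word n p.1) gs /\
    braid_eq n w (flatten [seq p.1 ++ sigma1_pow m p.2 ++ inv_word p.1 | p <- gs]).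

Definition in_commutator_of_normal_closure (n m : nat) (w : word) : Prop :=
  valid_word n w /\
  exists abs : seq (word * word),
    (forall p, p \in abs -> in_normal_closure n m p.1 /\ in_normal_closure n m p.2) /\
    braid_eq n w (flatten [seq p.1 ++ p.2 ++ inv_word p.1 ++ inv_word p.2 | p <- abs]).

(* H_1(N_n(sigma_1^m); Z) = N / [N, N] is free abelian of rank r:
   there is a surjective group homomorphism N -> Z^r whose kernel is [N, N]
   (first isomorphism theorem). *)
Definition H1_normal_closure_free_of_rank (n m r : nat) : Prop :=
  exists phi : word -> 'rV[int]_r,
    (forall w1 w2, in_normal_closure n m w1 -> in_normal_closure n m w2 ->
       braid_eq n w1 w2 -> phi w1 = phi w2) /\
    (forall w1 w2, in_normal_closure n m w1 -> in_normal_closure n m w2 ->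
       phi (w1 ++ w2) = phi w1 + phi w2) /\
    (forall v : 'rV[int]_r, exists w, in_normal_closure n m w /\ phi w = v) /\
    (forall w, in_normal_closure n m w ->
       (phi w = 0 <-> in_commutator_of_normal_closure n m w)).

(* Main.v *)
Require Import Defs.
From mathcomp Require Import all_boot all_order all_algebra.
From Stdlib Require Import Relations.
From mathcomp Require Import zify.
Set Implicit Arguments. Unset Strict Implicit. Unset Printing Implicit Defensive.

Definition inv_letter (l : letter) : letter := (l.1, ~~ l.2).

Lemma inv_word_cons l w : inv_word (l :: w) = inv_word w ++ [:: inv_letter l].
Proof. by rewrite /inv_word /= rev_cons cats1. Qed.
Lemma inv_word_cat u v : inv_word (u ++ v) = inv_word v ++ inv_word u.
Proof. by rewrite /inv_word map_cat rev_cat. Qed.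
Lemma inv_wordK w : inv_word (inv_word w) = w.
Proof.
elim: w => [//|[i b] w IH]; rewrite inv_word_cons inv_word_cat IH /=.
by rewrite /inv_word /= negbK.
Qed.
Lemma inv_word_nil : inv_word [::] = [::]. Proof. by []. Qed.
Lemma valid_cat n u v : valid_word n (u ++ v) = valid_word n u && valid_word n v.
Proof. exact: all_cat. Qed.
Lemma valid_inv n w : valid_word n (inv_word w) = valid_word n w.
Proof. by rewrite /valid_word /inv_word all_rev all_map. Qed.

Section BraidEq.
Variable n : nat.
Local Notation beq := (braid_eq n).
Local Notation valid := (valid_word n).

Lemma beq_refl w : beq w w. Proof. exact: rst_refl. Qed.
Lemma beq_sym a b : beq a b -> beq b a. Proof. exact: rst_sym. Qed.
Lemma beq_trans a b c : beq a b -> beq b c -> beq a c. Proof. exact: rst_trans. Qed.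

Lemma beq_catl c a b : beq a b -> beq (c ++ a) (c ++ b).
Proof.
rewrite /braid_eq; elim=> [x y []|x|x y _ IH|x y z _ IH1 _ IH2].
- move=> u v l r H; apply: rst_step; have := bs_rel (c ++ u) v H; by rewrite -!catA.
- exact: rst_refl.
- exact: rst_sym.
- exact: rst_trans IH2.
Qed.

Lemma beq_catr c a b : beq a b -> beq (a ++ c) (b ++ c).
Proof.
rewrite /braid_eq; elim=> [x y []|x|x y _ IH|x y z _ IH1 _ IH2].
- move=> u v l r H; apply: rst_step; have := bs_rel u (v ++ c) H; by rewrite -!catA.
- exact: rst_refl.
- exact: rst_sym.
- exact: rst_trans IH2.
Qed.

Lemma beq_cat a b c d : beq a b -> beq c d -> beq (a ++ c) (b ++ d).
Proof. move=> H1 H2; apply: beq_trans (beq_catr _ H1) (beq_catl _ H2). Qed.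

Lemma rel_valid l r : braid_rel n l r -> valid l && valid r.
Proof.
case=> [i b H|i j H1 H2|i H] /=; rewrite ?H ?H2 //=.
- by rewrite (ltn_trans _ H2) // (ltn_trans _ H1).
- by rewrite (ltn_trans _ H).
Qed.

Lemma beq_valid a b : beq a b -> valid a = valid b.
Proof.
rewrite /braid_eq; elim=> [x y []|x|x y _ IH|x y z _ IH1 _ IH2] //.
- move=> u v l r /rel_valid /andP[Hl Hr]; by rewrite !valid_cat Hl Hr.
- by rewrite IH1.
Qed.

Lemma beq_letter l : (l.1 < n.-1)%N -> beq [:: l; inv_letter l] [::].
Proof.
case: l => i b /= H; apply: rst_step.
have := bs_rel [::] [::] (br_free b H); by rewrite /=.
Qed.

Lemma beq_cancel w : valid w -> beq (w ++ inv_word w) [::].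
Proof.
elim: w => [_|l w IH]; first exact: beq_refl.
move=> /= /andP[Hl Hw].
rewrite inv_word_cons catA -cat_cons.
apply: beq_trans (beq_catr _ (beq_catl [:: l] (IH Hw))) _.
by rewrite /=; apply: beq_letter.
Qed.

Lemma beq_cancel' w : valid w -> beq (inv_word w ++ w) [::].
Proof.
move=> H; have := beq_cancel (w := inv_word w); rewrite inv_wordK valid_inv; exact.
Qed.

Lemma beq_inv a b : beq a b -> beq (inv_word a) (inv_word b).
Proof.
rewrite /braid_eq; elim=> [x y []|x|x y _ IH|x y z _ IH1 _ IH2].
- move=> u v l r H; rewrite !inv_word_cat; apply: beq_catr; apply: beq_catl.
  have /andP[Hl Hr] := rel_valid H.
  have Hlr : beq l r by apply: rst_step; have := bs_rel [::] [::] H; rewrite /= !cats0.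
  apply: beq_trans (_ : beq (inv_word l ++ r ++ inv_word r) _).
    rewrite -{1}(cats0 (inv_word l)); apply: beq_catl; apply: beq_sym; exact: beq_cancel.
  rewrite catA; apply: beq_trans (_ : beq (inv_word l ++ l ++ inv_word r) _).
    rewrite catA; apply: beq_catr; apply: beq_catl; exact: beq_sym.
  rewrite catA; apply: beq_trans (beq_catr _ (beq_cancel' Hl)) _; exact: beq_refl.
- exact: rst_refl.
- exact: rst_sym.
- exact: rst_trans IH2.
Qed.

Lemma beq_conj g a b : beq a b -> beq (g ++ a ++ inv_word g) (g ++ b ++ inv_word g).
Proof. by move=> H; apply: beq_catl; apply: beq_catr. Qed.

Lemma beq_conj_nil g : valid g -> beq (g ++ [::] ++ inv_word g) [::].
Proof. by move=> H; rewrite /=; apply: beq_cancel. Qed.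

Definition step_red (l : letter) (acc : word) : word :=
  if acc is l' :: acc' then (if l' == inv_letter l then acc' else l :: acc) else [:: l].
Definition fred (w : word) : word := foldr step_red [::] w.

Lemma beq_fred w : valid w -> beq w (fred w).
Proof.
elim: w => [_|l w IH /andP[Hl Hw]] /=; first exact: beq_refl.
apply: beq_trans (beq_catl [:: l] (IH Hw)) _.
rewrite /step_red; case: (fred w) => [|l' acc] /=; first exact: beq_refl.
case: eqP => [->|_]; last exact: beq_refl.
have := beq_catr acc (beq_letter Hl); by [].
Qed.

Lemma beq_fred_eq a b : valid a -> valid b -> fred a = fred b -> beq a b.
Proof.
move=> Ha Hb E; apply: beq_trans (beq_fred Ha) _; rewrite E; apply: beq_sym; exact: beq_fred.
Qed.

Definition relw (k : bool) (i j : nat) : word :=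
  if k then [:: (i,true); (i.+1,true); (i,true); (i.+1,false); (i,false); (i.+1,false)]
  else [:: (i,true); (j,true); (i,false); (j,false)].
Definition relok (k : bool) (i j : nat) : bool :=
  if k then (i.+1 < n.-1)%N else (i.+1 < j)%N && (j < n.-1)%N.

Lemma relw_beq k i j : relok k i j -> beq (relw k i j) [::].
Proof.
case: k => /=.
- move=> H.
  have Hr : braid_rel n [:: (i, true); (i.+1, true); (i, true)]
                        [:: (i.+1, true); (i, true); (i.+1, true)] by exact: br_braid.
  have /andP[_ Hv] := rel_valid Hr.
  have := beq_cancel Hv; rewrite /=.
  apply: beq_trans; apply: rst_step.
  have := bs_rel [::] [:: (i.+1, false); (i, false); (i.+1, false)] Hr; by [].
- move=> /andP[H1 H2].
  have Hr : braid_rel n [:: (i, true); (j, true)] [:: (j, true); (i, true)] by exact: br_comm.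
  have /andP[_ Hv] := rel_valid Hr.
  have := beq_cancel Hv; rewrite /=.
  apply: beq_trans; apply: rst_step.
  have := bs_rel [::] [:: (i, false); (j, false)] Hr; by [].
Qed.

End BraidEq.

Fixpoint allPr (gen : word -> Prop) (L : seq word) : Prop :=
  if L is u :: L' then gen u /\ allPr gen L' else True.

Section Closure.
Variables n m : nat.
Local Notation beq := (braid_eq n).
Local Notation valid := (valid_word n).
Hypothesis Hn : (0 < n.-1)%N.

Lemma cancel_mid x g y : valid g -> beq (x ++ (inv_word g ++ g) ++ y) (x ++ y).
Proof. move=> H; apply: beq_catl; have := beq_catr y (beq_cancel' H); by []. Qed.
Lemma cancel_mid' x g y : valid g -> beq (x ++ (g ++ inv_word g) ++ y) (x ++ y).
Proof. move=> H; apply: beq_catl; have := beq_catr y (beq_cancel H); by []. Qed.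

Definition prodset (gen : word -> Prop) (w : word) : Prop :=
  valid w /\ exists L : seq word, allPr gen L /\ beq w (flatten L).

Lemma ps_nil gen : prodset gen [::].
Proof. split=> //; exists [::]; split=> //; exact: beq_refl. Qed.

Lemma ps_gen (gen : word -> Prop) u : gen u -> valid u -> prodset gen u.
Proof. move=> H V; split=> //; exists [:: u]; split=> //=; rewrite cats0; exact: beq_refl. Qed.

Lemma ps_beq gen a b : prodset gen a -> beq a b -> prodset gen b.
Proof.
move=> [V [L [HL E]]] H; split; first by rewrite -(beq_valid H).
exists L; split=> //; apply: beq_trans E; exact: beq_sym.
Qed.

Lemma ps_cat gen a b : prodset gen a -> prodset gen b -> prodset gen (a ++ b).
Proof.
move=> [Va [L1 [H1 E1]]] [Vb [L2 [H2 E2]]]; split; first by rewrite valid_cat Va Vb.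
exists (L1 ++ L2); split; last by rewrite flatten_cat; exact: beq_cat.
by elim: L1 H1 {E1} => //= u L IH [? ?]; split=> //; apply: IH.
Qed.

Lemma ps_inv (gen : word -> Prop) a :
  (forall u, gen u -> prodset gen (inv_word u)) -> prodset gen a -> prodset gen (inv_word a).
Proof.
move=> Hg [Va [L [HL E]]].
have: prodset gen (inv_word (flatten L)).
  elim: L HL {E} => [_|u L IH [Hu HL]] /=; first exact: ps_nil.
  rewrite inv_word_cat; apply: ps_cat; [exact: IH | exact: Hg].
move=> H; apply: ps_beq H _; apply: beq_inv; exact: beq_sym.
Qed.

Lemma ps_conj (gen : word -> Prop) g a :
  (forall u, gen u -> prodset gen (g ++ u ++ inv_word g)) -> valid g ->
  prodset gen a -> prodset gen (g ++ a ++ inv_word g).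
Proof.
move=> Hg Vg [Va [L [HL E]]].
have: prodset gen (g ++ flatten L ++ inv_word g).
  elim: L HL {E} => [_|u L IH [Hu HL]] /=.
    apply: ps_beq (ps_nil gen) _; apply: beq_sym; exact: beq_cancel.
  have := ps_cat (Hg _ Hu) (IH HL) => H; apply: ps_beq H _.
  have -> : (g ++ u ++ inv_word g) ++ g ++ flatten L ++ inv_word g =
            (g ++ u) ++ (inv_word g ++ g) ++ (flatten L ++ inv_word g) by rewrite -!catA.
  apply: beq_trans (cancel_mid _ _ Vg) _; rewrite -!catA; exact: beq_refl.
move=> H; apply: ps_beq H _; apply: beq_conj; exact: beq_sym.
Qed.

Definition xw (s : bool) : word := sigma1_pow m s.

Lemma inv_xw s : inv_word (xw s) = xw (~~ s).
Proof. by rewrite /inv_word /xw /sigma1_pow map_nseq rev_nseq. Qed.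

Lemma valid_xw s : valid (xw s).
Proof. by rewrite /xw /sigma1_pow /valid_word all_nseq Hn orbT. Qed.

Definition gx (u : word) : Prop := exists g s, valid g /\ u = g ++ xw s ++ inv_word g.

Lemma INN_iff w : in_normal_closure n m w <-> prodset gx w.
Proof.
split.
- move=> [V [gs [Hgs E]]]; split=> //.
  exists [seq p.1 ++ sigma1_pow m p.2 ++ inv_word p.1 | p <- gs]; split=> //.
  elim: gs Hgs {E} => //= p gs IH /andP[Hp Hgs]; split; last exact: IH.
  by exists p.1, p.2.
- move=> [V [L [HL E]]]; split=> //.
  suff [gs [H1 H2]] : exists gs : seq (word * bool), all (fun p => valid p.1) gs /\
     flatten L = flatten [seq p.1 ++ sigma1_pow m p.2 ++ inv_word p.1 | p <- gs].
    by exists gs; split=> //; rewrite -H2.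
  elim: L HL {E} => [_|u L IH [[g [s [Vg ->]]] HL]]; first by exists [::].
  have [gs [H1 H2]] := IH HL; exists ((g, s) :: gs) => /=; split; first by rewrite Vg.
  by rewrite H2.
Qed.

Lemma gx_inv u : gx u -> prodset gx (inv_word u).
Proof.
move=> [g [s [Vg ->]]]; apply: ps_gen.
  exists g, (~~ s); split=> //; by rewrite !inv_word_cat inv_wordK inv_xw catA.
by rewrite !inv_word_cat inv_wordK inv_xw -catA !valid_cat valid_inv Vg valid_xw.
Qed.

Lemma gx_conj g u : valid g -> gx u -> prodset gx (g ++ u ++ inv_word g).
Proof.
move=> Vg [h [s [Vh ->]]]; apply: ps_gen.
  exists (g ++ h), s; split; first by rewrite valid_cat Vg Vh.
  by rewrite inv_word_cat -!catA.
by rewrite !valid_cat !valid_inv Vg Vh valid_xw.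
Qed.

Lemma gx_x s : prodset gx (xw s).
Proof. apply: ps_gen; last exact: valid_xw. by exists [::], s; rewrite /= cats0. Qed.
End Closure.

Section Comm.
Variables n m : nat.
Local Notation beq := (braid_eq n).
Local Notation valid := (valid_word n).
Hypothesis Hn : (0 < n.-1)%N.
Local Notation IN := (prodset n (gx n m)).
Local Notation xw := (xw m).

Definition gc (u : word) : Prop :=
  exists a b, IN a /\ IN b /\ u = a ++ b ++ inv_word a ++ inv_word b.
Local Notation CN := (prodset n gc).

Lemma IN_valid w : IN w -> valid w. Proof. by case. Qed.
Lemma IN_conj g a : valid g -> IN a -> IN (g ++ a ++ inv_word g).
Proof. move=> Vg; apply: ps_conj => // u Hu; exact: gx_conj. Qed.
Lemma IN_inv a : IN a -> IN (inv_word a).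
Proof. apply: ps_inv => u Hu; exact: gx_inv. Qed.

Lemma NN_iff w : in_commutator_of_normal_closure n m w <-> CN w.
Proof.
split.
- move=> [V [abs [Habs E]]]; split=> //.
  exists [seq p.1 ++ p.2 ++ inv_word p.1 ++ inv_word p.2 | p <- abs]; split=> //.
  elim: abs Habs {E} => //= p abs IH H; split; last first.
    apply: IH => q Hq; apply: H; by rewrite in_cons Hq orbT.
  have [H1 H2] := H p (mem_head _ _).
  exists p.1, p.2; split; first exact/INN_iff.
  by split; first exact/INN_iff.
- move=> [V [L [HL E]]]; split=> //.
  suff [abs [H1 H2]] : exists abs : seq (word * word),
     (forall p, p \in abs -> in_normal_closure n m p.1 /\ in_normal_closure n m p.2) /\
     flatten L = flatten [seq p.1 ++ p.2 ++ inv_word p.1 ++ inv_word p.2 | p <- abs].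
    by exists abs; split=> //; rewrite -H2.
  elim: L HL {E} => [_|u L IH [[a [b [Ha [Hb ->]]]] HL]]; first by exists [::].
  have [abs [H1 H2]] := IH HL; exists ((a, b) :: abs) => /=; split; last by rewrite H2.
  move=> p; rewrite in_cons => /orP[/eqP -> /=|]; last exact: H1.
  by split; apply/INN_iff.
Qed.

Lemma gc_valid u : gc u -> valid u.
Proof.
move=> [a [b [Ha [Hb ->]]]]; by rewrite !valid_cat !valid_inv (IN_valid Ha) (IN_valid Hb).
Qed.

Lemma CN_comm a b : IN a -> IN b -> CN (a ++ b ++ inv_word a ++ inv_word b).
Proof.
move=> Ha Hb; apply: ps_gen; first by exists a, b.
by apply: gc_valid; exists a, b.
Qed.

Lemma CN_inv a : CN a -> CN (inv_word a).
Proof.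
apply: ps_inv => u [a' [b [Ha [Hb ->]]]].
rewrite !inv_word_cat !inv_wordK -!catA; exact: CN_comm.
Qed.

Lemma CN_conj g a : valid g -> CN a -> CN (g ++ a ++ inv_word g).
Proof.
move=> Vg; apply: ps_conj => // u [a' [b [Ha [Hb ->]]]].
have Va := IN_valid Ha; have Vb := IN_valid Hb.
have := CN_comm (IN_conj Vg Ha) (IN_conj Vg Hb) => H; apply: ps_beq H _.
rewrite !inv_word_cat !inv_wordK -!catA.
set A := a'; set B := b; set iA := inv_word a'; set iB := inv_word b; set ig := inv_word g.
have -> : g ++ A ++ ig ++ g ++ B ++ ig ++ g ++ iA ++ ig ++ g ++ iB ++ ig =
   (g ++ A) ++ (ig ++ g) ++ (B ++ ig ++ g ++ iA ++ ig ++ g ++ iB ++ ig) by rewrite -!catA.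
apply: beq_trans (cancel_mid _ _ Vg) _.
have -> : (g ++ A) ++ B ++ ig ++ g ++ iA ++ ig ++ g ++ iB ++ ig =
   (g ++ A ++ B) ++ (ig ++ g) ++ (iA ++ ig ++ g ++ iB ++ ig) by rewrite -!catA.
apply: beq_trans (cancel_mid _ _ Vg) _.
have -> : (g ++ A ++ B) ++ iA ++ ig ++ g ++ iB ++ ig =
   (g ++ A ++ B ++ iA) ++ (ig ++ g) ++ (iB ++ ig) by rewrite -!catA.
apply: beq_trans (cancel_mid _ _ Vg) _.
rewrite -!catA; exact: beq_refl.
Qed.

Lemma CN_nil : CN [::]. Proof. exact: ps_nil. Qed.
Lemma CN_cat a b : CN a -> CN b -> CN (a ++ b). Proof. exact: ps_cat. Qed.
Lemma CN_beq a b : CN a -> beq a b -> CN b. Proof. exact: ps_beq. Qed.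

Definition E (a b : word) : Prop := CN (a ++ inv_word b).

Lemma E_beq a b : valid a -> beq a b -> E a b.
Proof.
move=> Va H; apply: CN_beq CN_nil _; apply: beq_sym.
apply: beq_trans (beq_catr _ H) _; apply: beq_cancel; by rewrite -(beq_valid H).
Qed.
Lemma E_refl a : valid a -> E a a. Proof. move=> V; apply: E_beq V (beq_refl _ _). Qed.
Lemma E_sym a b : E a b -> E b a.
Proof. move=> H; have := CN_inv H; by rewrite /E inv_word_cat inv_wordK. Qed.
Lemma E_trans a b c : valid b -> E a b -> E b c -> E a c.
Proof.
move=> Vb H1 H2; apply: CN_beq (CN_cat H1 H2) _.
have := cancel_mid a (inv_word c) Vb; by rewrite -!catA.
Qed.
Lemma E_catr a b c : valid c -> E a b -> E (a ++ c) (b ++ c).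
Proof.
move=> Vc H; apply: CN_beq H _; rewrite /E inv_word_cat.
have := cancel_mid' a (inv_word b) Vc; rewrite -!catA => H'; exact: beq_sym.
Qed.
Lemma E_catl a b c : valid c -> E a b -> E (c ++ a) (c ++ b).
Proof. move=> Vc H; have := CN_conj Vc H; by rewrite /E inv_word_cat -!catA. Qed.
Lemma E_cat a b c d : valid b -> valid c -> E a b -> E c d -> E (a ++ c) (b ++ d).
Proof.
move=> Vb Vc H1 H2; apply: E_trans (E_catr Vc H1) (E_catl Vb H2).
by rewrite valid_cat Vb Vc.
Qed.
Lemma E_comm a b : IN a -> IN b -> E (a ++ b) (b ++ a).
Proof. move=> Ha Hb; have := CN_comm Ha Hb; by rewrite /E inv_word_cat -!catA. Qed.
Lemma E_conj g a b : valid g -> E a b -> E (g ++ a ++ inv_word g) (g ++ b ++ inv_word g).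
Proof.
move=> Vg H; have := CN_conj Vg H => H'; apply: CN_beq H' _.
rewrite /E !inv_word_cat inv_wordK -!catA.
have := cancel_mid (g ++ a) (inv_word b ++ inv_word g) Vg; rewrite -!catA => H2.
exact: beq_sym.
Qed.
Lemma E_inv a b : valid a -> E a b -> E (inv_word a) (inv_word b).
Proof.
move=> Va H; have Va' : valid (inv_word a) by rewrite valid_inv.
have H1 := CN_conj Va' H; rewrite inv_wordK in H1.
have H2 : CN (inv_word b ++ a).
  apply: CN_beq H1 _.
  have := cancel_mid [::] (inv_word b ++ a) Va; rewrite /= -!catA; exact.
have := CN_inv H2; by rewrite /E inv_word_cat.
Qed.

Definition K (h : word) : Prop := valid h /\ E (h ++ xw true ++ inv_word h) (xw true).

Lemma valid_conjx h s : valid h -> valid (h ++ xw s ++ inv_word h).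
Proof. by move=> V; rewrite !valid_cat valid_inv V valid_xw. Qed.

Lemma K_beq h h' : K h -> beq h h' -> K h'.
Proof.
move=> [V H] B; have V' : valid h' by rewrite -(beq_valid B).
split=> //; apply: E_trans (valid_conjx _ V) _ H.
apply: E_beq (valid_conjx _ V') _; apply: beq_cat (beq_sym B) _.
apply: beq_catl; exact: beq_inv (beq_sym B).
Qed.

Lemma K_nil : K [::].
Proof. split=> //; rewrite /= cats0; apply: E_refl; exact: valid_xw. Qed.

Lemma K_cat h1 h2 : K h1 -> K h2 -> K (h1 ++ h2).
Proof.
move=> [V1 H1] [V2 H2]; split; first by rewrite valid_cat V1 V2.
apply: E_trans (valid_conjx _ V1) _ H1.
have := E_conj V1 H2; rewrite inv_word_cat -!catA; exact.
Qed.

Lemma K_inv h : K h -> K (inv_word h).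
Proof.
move=> [V H]; have V' : valid (inv_word h) by rewrite valid_inv.
split=> //; apply: E_sym; rewrite inv_wordK.
have := E_conj V' H; rewrite inv_wordK => H'.
have B : beq (inv_word h ++ (h ++ xw true ++ inv_word h) ++ h) (xw true).
  have := cancel_mid [::] (xw true ++ inv_word h ++ h) V; rewrite /= -!catA => H2.
  apply: beq_trans H2 _; rewrite -[xw true in X in beq _ X]cats0.
  apply: beq_catl; exact: beq_cancel'.
apply: (E_trans (b := inv_word h ++ (h ++ xw true ++ inv_word h) ++ h)) _ _ H'.
  by rewrite (beq_valid B) valid_xw.
apply: E_beq; [exact: valid_xw | exact: beq_sym].
Qed.

Lemma IN_x s : IN (xw s). Proof. exact: gx_x. Qed.

Lemma K_IN h : IN h -> K h.
Proof.
move=> H; split; first exact: IN_valid.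
have := CN_comm H (IN_x true); by rewrite /E -!catA.
Qed.

Lemma K_comm c : valid c -> beq (c ++ xw true) (xw true ++ c) -> K c.
Proof.
move=> V B; split=> //; apply: E_beq (valid_conjx _ V) _.
rewrite catA; apply: beq_trans (beq_catr _ B) _.
rewrite -catA -[xw true in X in beq _ X]cats0; apply: beq_catl; exact: beq_cancel.
Qed.

Lemma K_E h s : K h -> E (h ++ xw s ++ inv_word h) (xw s).
Proof.
case: s => [[]//|[V H]].
have := E_inv (valid_conjx _ V) H.
by rewrite !inv_word_cat inv_wordK !inv_xw -catA.
Qed.

End Comm.

Import GRing.Theory Num.Theory.
Local Open Scope ring_scope.

Inductive tok :=
| TRel of word & bool & nat & nat & bool
| TX of word & bool
| TC of nat & bool
| TRef of nat & nat & bool.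

Section Data.
Variables (n m r : nat) (tbl tblinv : seq (seq nat)) (A : seq (seq int)) (Lsc : int)
  (ts : seq word) (cg : seq word) (ccert : seq (seq tok)) (ecert : seq (nat * nat * seq tok)).

Local Notation beq := (braid_eq n).
Local Notation valid := (valid_word n).
Local Notation IN := (prodset n (gx n m)).
Local Notation CN := (prodset n (gc n m)).
Local Notation xw := (xw m).
Local Notation K := (K n m).

Definition pl (l : letter) (y : nat) : nat :=
  nth y (nth [::] (if l.2 then tbl else tblinv) l.1) y.
Definition act (w : word) (y : nat) : nat := foldr pl y w.
Definition actinv (w : word) (y : nat) : nat := foldl (fun y l => pl (inv_letter l) y) y w.
Definition avec (l : letter) (y : nat) : int :=
  let a := nth [::] A l.1 in
  if l.2 then nth 0 a y else - nth 0 a (pl (l.1, true) y).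
Fixpoint dd (w : word) (y : nat) : int :=
  if w is l :: w' then avec l y + dd w' (pl (inv_letter l) y) else 0.

Definition chk (l r' : word) : bool :=
  all (fun y => [&& act l y == act r' y, actinv l y == actinv r' y & dd l y == dd r' y])
      (iota 0 r).

Definition rows_ok : bool :=
  [&& all (fun row => (size row == r) && all (fun y => (y < r)%N) row) tbl,
  all (fun row => (size row == r) && all (fun y => (y < r)%N) row) tblinv &
  all (fun a => size a == r) A].

Definition rels_ok : bool :=
  [&& all (fun i => chk [:: (i, true); (i, false)] [::] && chk [:: (i, false); (i, true)] [::])
      (iota 0 n.-1),
  all (fun i => all (fun j => (i.+1 < j)%N ==> chk [:: (i, true); (j, true)] [:: (j, true); (i, true)])
      (iota 0 n.-1)) (iota 0 n.-1) &
  all (fun i => (i.+1 < n.-1)%N ==>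
      chk [:: (i, true); (i.+1, true); (i, true)] [:: (i.+1, true); (i, true); (i.+1, true)])
      (iota 0 n.-1)].

Definition x_ok : bool :=
  all (fun y => (actinv (xw true) y == y) && (dd (xw true) y == (if y == 0%N then Lsc else 0)))
      (iota 0 r).

Hypothesis Hn : (0 < n.-1)%N.
Hypothesis Hrows : rows_ok.
Hypothesis Hrels : rels_ok.
Hypothesis Hx : x_ok.
Hypothesis HL : Lsc != 0.

Lemma pl_ge l y : (r <= y)%N -> pl l y = y.
Proof.
move=> H; rewrite /pl.
suff Hs : (size (nth [::] (if l.2 then tbl else tblinv) l.1) <= y)%N by rewrite nth_default.
case/and3P: Hrows => H1 H2 _.
case: l => i [] /=.
- case: (ltnP i (size tbl)) => Hi; last by rewrite nth_default.
  by move/allP: H1 => /(_ _ (mem_nth [::] Hi)) /andP[/eqP -> _].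
- case: (ltnP i (size tblinv)) => Hi; last by rewrite nth_default.
  by move/allP: H2 => /(_ _ (mem_nth [::] Hi)) /andP[/eqP -> _].
Qed.

Lemma pl_lt l y : (y < r)%N -> (pl l y < r)%N.
Proof.
move=> H; rewrite /pl.
case/and3P: Hrows => H1 H2 _.
have gen (T : seq (seq nat)) : all (fun row => (size row == r) && all (fun y => (y < r)%N) row) T ->
    (nth y (nth [::] T l.1) y < r)%N.
  move=> HT; case: (ltnP l.1 (size T)) => Hi; last by rewrite (nth_default [::] Hi) nth_nil.
  move/allP: HT => /(_ _ (mem_nth [::] Hi)) /andP[/eqP Hs /allP Ha].
  apply: Ha; apply: mem_nth; by rewrite Hs.
by case: l.2; apply: gen.
Qed.

Lemma avec_ge l y : (r <= y)%N -> avec l y = 0.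
Proof.
move=> H; rewrite /avec; case/and3P: Hrows => _ _ H3.
have E : nth 0 (nth [::] A l.1) y = 0.
  case: (ltnP l.1 (size A)) => Hi; last by rewrite (nth_default [::] Hi) nth_nil.
  rewrite nth_default //; move/allP: H3 => /(_ _ (mem_nth [::] Hi)) /eqP ->; exact: H.
by case: l.2; rewrite ?pl_ge // E ?oppr0.
Qed.

Lemma act_ge w y : (r <= y)%N -> act w y = y.
Proof. move=> H; elim: w => //= l w ->; exact: pl_ge. Qed.
Lemma actinv_ge w y : (r <= y)%N -> actinv w y = y.
Proof. elim: w y => //= l w IH y H; rewrite pl_ge //; exact: IH. Qed.
Lemma dd_ge w y : (r <= y)%N -> dd w y = 0.
Proof. elim: w y => //= l w IH y H; rewrite pl_ge // avec_ge // IH // add0r. Qed.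

Lemma act_cat u v y : act (u ++ v) y = act u (act v y).
Proof. by rewrite /act foldr_cat. Qed.
Lemma actinv_cat u v y : actinv (u ++ v) y = actinv v (actinv u y).
Proof. by rewrite /actinv foldl_cat. Qed.
Lemma dd_cat u v y : dd (u ++ v) y = dd u y + dd v (actinv u y).
Proof. elim: u y => [|l u IH] y /=; first by rewrite add0r. by rewrite IH addrA. Qed.

Lemma chkP l r' : chk l r' ->
  forall y, [/\ act l y = act r' y, actinv l y = actinv r' y & dd l y = dd r' y].
Proof.
move=> /allP H y; case: (ltnP y r) => Hy.
  have := H y; rewrite mem_iota add0n Hy => /(_ isT) /and3P[/eqP ? /eqP ? /eqP ?]; by split.
by rewrite !act_ge // !actinv_ge // !dd_ge.
Qed.

Lemma rel_chk l r' : braid_rel n l r' -> chk l r'.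
Proof.
case/and3P: Hrels => H1 H2 H3.
case=> [i b Hi|i j Hij Hj|i Hi].
- move/allP: H1 => /(_ i); rewrite mem_iota add0n Hi => /(_ isT) /andP[].
  by case: b.
- move/allP: H2 => /(_ i); rewrite mem_iota add0n (ltn_trans _ Hj) ?(ltn_trans _ Hij) //.
  move=> /(_ isT) /allP /(_ j); rewrite mem_iota add0n Hj Hij; by move=> /(_ isT).
- move/allP: H3 => /(_ i); rewrite mem_iota add0n (ltn_trans _ Hi) // Hi; by move=> /(_ isT).
Qed.

Lemma beq_inv_all a b : beq a b ->
  forall y, [/\ act a y = act b y, actinv a y = actinv b y & dd a y = dd b y].
Proof.
rewrite /braid_eq; elim=> [x y []|x|x y _ IH|x y z _ IH1 _ IH2].
- move=> u v l r' /rel_chk /chkP H y0.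
  rewrite !(act_cat, actinv_cat, dd_cat).
  have [E1 E2 E3] := H (act v y0); have [F1 F2 F3] := H (actinv u y0).
  by rewrite E1 F2 F3.
- by [].
- move=> y0; have [? ? ?] := IH y0; by split.
- move=> y0; have [? ? ?] := IH1 y0; have [? ? ?] := IH2 y0; split; congruence.
Qed.

Lemma pl_inv l y : (l.1 < n.-1)%N -> pl (inv_letter l) (pl l y) = y.
Proof.
case: l => i b /= Hi.
case/and3P: Hrels => H1 _ _.
move/allP: H1 => /(_ i); rewrite mem_iota add0n Hi => /(_ isT) /andP[Ht Hf].
case: b => /=.
- by have [/= -> _ _] := chkP Hf y.
- by have [/= -> _ _] := chkP Ht y.
Qed.

Lemma actinvK w y : valid w -> actinv w (act w y) = y.
Proof.
elim: w y => //= l w IH y /andP[Hl Hw]; by rewrite pl_inv // IH.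
Qed.
Lemma actK w y : valid w -> act w (actinv w y) = y.
Proof.
elim: w y => //= l w IH y /andP[Hl Hw]; rewrite IH //.
have := pl_inv (l := inv_letter l) y; rewrite /inv_letter /= negbK; case: l Hl {Hw} => /= i b Hl.
by move=> ->.
Qed.


Hypothesis Hr : (0 < r)%N.

Lemma beq_act a b y : beq a b -> act a y = act b y.
Proof. by move=> H; have [] := beq_inv_all H y. Qed.
Lemma beq_actinv a b y : beq a b -> actinv a y = actinv b y.
Proof. by move=> H; have [] := beq_inv_all H y. Qed.
Lemma beq_dd a b y : beq a b -> dd a y = dd b y.
Proof. by move=> H; have [] := beq_inv_all H y. Qed.

Lemma act_lt w y : (y < r)%N -> (act w y < r)%N.
Proof. elim: w => //= l w IH H; apply: pl_lt; exact: IH. Qed.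

Lemma x_facts y : actinv (xw true) y = y /\ dd (xw true) y = (if y == 0%N then Lsc else 0).
Proof.
case: (ltnP y r) => Hy.
  move/allP: Hx => /(_ y); rewrite mem_iota add0n Hy => /(_ isT) /andP[/eqP -> /eqP ->]; by [].
rewrite actinv_ge // dd_ge //; split=> //.
by case: eqP => // E; move: Hy Hr; rewrite E; case: r.
Qed.

Lemma dd_cancel w y : valid w -> dd w y + dd (inv_word w) (actinv w y) = 0.
Proof. by move=> V; rewrite -dd_cat (beq_dd _ (beq_cancel V)). Qed.
Lemma actinv_cancel w y : valid w -> actinv (inv_word w) (actinv w y) = y.
Proof. by move=> V; rewrite -actinv_cat (beq_actinv _ (beq_cancel V)). Qed.

Definition sg (s : bool) : int := if s then 1 else -1.

Lemma x_facts_s s y : actinv (xw s) y = y /\ dd (xw s) y = (if y == 0%N then sg s * Lsc else 0).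
Proof.
have [A1 A2] := x_facts y.
have V : valid (xw true) by apply: valid_xw.
case: s; first by rewrite A1 A2 mul1r.
have E : xw false = inv_word (xw true) by rewrite inv_xw.
split; first by rewrite E -{1}A1 actinv_cancel.
have := dd_cancel y V; rewrite A1 A2 -E => H.
have -> : dd (xw false) y = - (if y == 0%N then Lsc else 0).
  by apply/eqP; rewrite -addr_eq0 addrC H.
by case: eqP; rewrite ?oppr0 // mulN1r.
Qed.

Lemma sgN s : sg s + sg (~~ s) = 0. Proof. by case: s; rewrite /= ?addrN ?addNr. Qed.

Definition conjw (g : word) (s : bool) : word := g ++ xw s ++ inv_word g.

Lemma actinv_eq0 g y : valid g -> (actinv g y == 0%N) = (y == act g 0).
Proof.
move=> V; apply/eqP/eqP => [<-|->]; [by rewrite actK | exact: actinvK].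
Qed.

Lemma conj_actinv g s y : valid g -> actinv (conjw g s) y = y.
Proof.
move=> V; rewrite /conjw !actinv_cat; have [-> _] := x_facts_s s (actinv g y).
exact: actinv_cancel.
Qed.

Lemma conj_dd g s y : valid g -> dd (conjw g s) y = if y == act g 0 then sg s * Lsc else 0.
Proof.
move=> V; rewrite /conjw !dd_cat; have [-> ->] := x_facts_s s (actinv g y).
have := dd_cancel y V => H.
by rewrite addrCA H addr0 actinv_eq0.
Qed.

Definition cw (gs : seq (word * bool)) : word := flatten [seq conjw p.1 p.2 | p <- gs].
Definition cnt (ys : seq (nat * bool)) (y : nat) : int :=
  foldr (fun q acc => (if q.1 == y then sg q.2 else 0) + acc) 0 ys.
Definition ysof (gs : seq (word * bool)) := [seq (act p.1 0, p.2) | p <- gs].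

Lemma cw_valid gs : all (fun p => valid p.1) gs -> valid (cw gs).
Proof.
elim: gs => //= p gs IH /andP[H1 H2]; rewrite valid_cat IH // andbT /conjw.
by rewrite !valid_cat valid_inv H1 valid_xw.
Qed.

Lemma cw_facts gs y : all (fun p => valid p.1) gs ->
  actinv (cw gs) y = y /\ dd (cw gs) y = Lsc * cnt (ysof gs) y.
Proof.
elim: gs y => [|p gs IH] y /=; first by rewrite mulr0.
move=> /andP[H1 H2]; rewrite actinv_cat dd_cat conj_actinv //; have [-> ->] := IH y H2.
split=> //; rewrite conj_dd // mulrDr; congr (_ + _).
by rewrite eq_sym; case: eqP; rewrite ?mulr0 // mulrC.
Qed.

Lemma IN_struct w : IN w -> exists gs, all (fun p => valid p.1) gs /\ beq w (cw gs).
Proof. move=> /(INN_iff n m w) [V [gs [H1 H2]]]; by exists gs. Qed.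

Lemma IN_actinv w y : IN w -> actinv w y = y.
Proof.
move=> /IN_struct [gs [H1 H2]]; rewrite (beq_actinv _ H2); by have [] := cw_facts y H1.
Qed.

Lemma IN_dd w : IN w -> exists gs, all (fun p => valid p.1) gs /\
   forall y, dd w y = Lsc * cnt (ysof gs) y.
Proof.
move=> /IN_struct [gs [H1 H2]]; exists gs; split=> // y; rewrite (beq_dd _ H2).
by have [] := cw_facts y H1.
Qed.

Lemma IN_cat a b : IN a -> IN b -> IN (a ++ b). Proof. exact: ps_cat. Qed.

Lemma IN_dd_inv a y : IN a -> dd (inv_word a) y = - dd a y.
Proof.
move=> H; have := dd_cancel y (IN_valid H); rewrite IN_actinv // => E.
by apply/eqP; rewrite -addr_eq0 addrC E.
Qed.

Lemma CN_dd w y : CN w -> dd w y = 0.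
Proof.
move=> [V [L [HL0 E]]]; rewrite (beq_dd _ E).
elim: L HL0 {E} y => //= u L IH [[a [b [Ha [Hb ->]]]] HL1] y.
have Hu : IN (a ++ b ++ inv_word a ++ inv_word b).
  by apply: IN_cat Ha (IN_cat Hb (IN_cat (IN_inv Hn Ha) (IN_inv Hn Hb))).
rewrite dd_cat IN_actinv // IH // addr0.
rewrite dd_cat (IN_actinv _ Ha) dd_cat (IN_actinv _ Hb) dd_cat (IN_actinv _ (IN_inv Hn Ha)) (IN_dd_inv _ Ha) (IN_dd_inv _ Hb).
by rewrite addrCA addNKr subrr.
Qed.

Lemma CN_IN w : CN w -> IN w.
Proof.
move=> [V [L [HL0 E]]]; apply: ps_beq _ (beq_sym E).
elim: L HL0 {E} => [_|u L IH [[a [b [Ha [Hb ->]]]] HL0]] /=; first exact: ps_nil.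
apply: IN_cat (IN_cat Ha (IN_cat Hb (IN_cat (IN_inv Hn Ha) (IN_inv Hn Hb)))) (IH HL0).
Qed.

Definition phi (w : word) : 'rV[int]_r := \row_(i < r) (dd w i %/ Lsc)%Z.

Lemma phi_beq a b : beq a b -> phi a = phi b.
Proof. by move=> H; apply/rowP => i; rewrite !mxE (beq_dd _ H). Qed.

Lemma phi_add a b : IN a -> IN b -> phi (a ++ b) = phi a + phi b.
Proof.
move=> Ha Hb; apply/rowP => i; rewrite !mxE dd_cat IN_actinv //.
have [ga [_ Ea]] := IN_dd Ha; have [gb [_ Eb]] := IN_dd Hb.
by rewrite Ea Eb -mulrDr !mulKz.
Qed.

Lemma phi_CN w : CN w -> phi w = 0.
Proof. by move=> H; apply/rowP => i; rewrite !mxE CN_dd // div0z. Qed.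


Definition tsn (y : nat) : word := nth [::] ts y.
Definition entryw (z i : nat) : word := inv_word (tsn (pl (i, true) z)) ++ (i, true) :: tsn z.
Definition relw' k i j (s : bool) : word := if s then relw k i j else inv_word (relw k i j).
Definition tword (t : tok) : word :=
  match t with
  | TRel u k i j s => u ++ relw' k i j s ++ inv_word u
  | TX u s => conjw u s
  | TC k s => if s then nth [::] cg k else inv_word (nth [::] cg k)
  | TRef z i s => if s then entryw z i else inv_word (entryw z i)
  end.
Definition tokok (done : seq (nat * nat)) (t : tok) : bool :=
  match t with
  | TRel u k i j _ => valid u && relok n k i j
  | TX u _ => valid u
  | TC k _ => (k < size cg)%N
  | TRef z i _ => (z, i) \in done
  end.
Fixpoint checkE (done : seq (nat * nat)) (cs : seq (nat * nat * seq tok)) : bool :=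
  if cs is (z, i, toks) :: cs' then
    [&& (z < r)%N, (i < n.-1)%N, all (tokok done) toks,
        fred (entryw z i) == fred (flatten (map tword toks)) & checkE ((z, i) :: done) cs']
  else true.
Definition isrel (t : tok) : bool := if t is TRel _ _ _ _ _ then true else false.
Definition cg_ok : bool :=
  (size ccert == size cg) && all (fun k =>
      let c := nth [::] cg k in let toks := nth [::] ccert k in
      [&& valid c, all isrel toks, all (tokok [::]) toks &
          fred (c ++ [:: (0%N, true)] ++ inv_word c ++ [:: (0%N, false)]) ==
          fred (flatten (map tword toks))])
    (iota 0 (size cg)).
Definition ts_ok : bool :=
  [&& size ts == r, all valid ts, tsn 0 == [::] & all (fun y => act (tsn y) 0 == y) (iota 0 r)].
Definition ecert_ok : bool :=
  checkE [::] ecert &&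
  all (fun z => all (fun i => (z, i) \in map (fun c => c.1) ecert) (iota 0 n.-1)) (iota 0 r).

Hypothesis Hts : ts_ok.
Hypothesis Hcg : cg_ok.
Hypothesis He : ecert_ok.

Lemma tsn_valid y : valid (tsn y).
Proof.
case/and4P: Hts => _ /allP H _ _; rewrite /tsn.
case: (ltnP y (size ts)) => Hy; last by rewrite nth_default.
apply: H; exact: mem_nth.
Qed.

Lemma tsn0 : tsn 0 = [::]. Proof. by case/and4P: Hts => _ _ /eqP. Qed.

Lemma act_tsn y : (y < r)%N -> act (tsn y) 0 = y.
Proof. case/and4P: Hts => _ _ _ /allP H Hy; apply/eqP; apply: H; by rewrite mem_iota. Qed.

Lemma relw'_beq k i j s : relok n k i j -> beq (relw' k i j s) [::].
Proof.
move=> H; have := relw_beq H; case: s => //= H'.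
have := beq_inv H'; by [].
Qed.

Lemma TRel_beq u k i j s : valid u -> relok n k i j -> beq (u ++ relw' k i j s ++ inv_word u) [::].
Proof.
move=> V H; apply: beq_trans (beq_conj u (relw'_beq s H)) _; exact: beq_conj_nil.
Qed.

Lemma K_letter_tok done t :
  (forall p, p \in done -> K (entryw p.1 p.2)) ->
  (forall k, (k < size cg)%N -> K (nth [::] cg k)) ->
  tokok done t -> K (tword t).
Proof.
move=> Hd Hc; case: t => /=.
- move=> u k i j s /andP[V H]; apply: (K_beq Hn (K_nil m Hn)); apply: beq_sym; exact: TRel_beq.
- move=> u s V; apply: (K_IN Hn); apply: (IN_conj Hn V); exact: gx_x.
- move=> k s Hk; case: s; [exact: Hc | apply: (K_inv Hn); exact: Hc].
- move=> z i s Hzi; case: s; [exact: (Hd (z, i)) | apply: (K_inv Hn); exact: (Hd (z, i))].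
Qed.

Lemma K_flat done toks :
  (forall p, p \in done -> K (entryw p.1 p.2)) ->
  (forall k, (k < size cg)%N -> K (nth [::] cg k)) ->
  all (tokok done) toks -> K (flatten (map tword toks)).
Proof.
move=> Hd Hc; elim: toks => [_|t toks IH /andP[H1 H2]] /=; first exact: K_nil.
have X := K_cat Hn (K_letter_tok Hd Hc H1) (IH H2); exact X.
Qed.

Lemma K_valid h : K h -> valid h. Proof. by case. Qed.

Lemma entryw_valid z i : (i < n.-1)%N -> valid (entryw z i).
Proof. by move=> H; rewrite /entryw valid_cat valid_inv tsn_valid /= H tsn_valid. Qed.

Lemma checkE_K done cs :
  (forall k, (k < size cg)%N -> K (nth [::] cg k)) ->
  checkE done cs -> (forall p, p \in done -> K (entryw p.1 p.2)) ->
  forall p, p \in done ++ map (fun c => c.1) cs -> K (entryw p.1 p.2).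
Proof.
move=> Hc; elim: cs done => [|[[z i] toks] cs IH] done /=.
  by move=> _ Hd p; rewrite cats0; apply: Hd.
move=> /and5P[Hz Hi Ht /eqP Ef Hrest] Hd.
have Kzi : K (entryw z i).
  have Hf := K_flat Hd Hc Ht.
  apply: (K_beq Hn Hf); apply: beq_fred_eq (K_valid Hf) (entryw_valid _ Hi) _; by rewrite Ef.
have := IH ((z, i) :: done) Hrest => H p Hp.
apply: H => [q|]; first by rewrite in_cons => /orP[/eqP -> //|]; apply: Hd.
move: Hp; rewrite !(mem_cat, in_cons); by case: (p \in done); case: (p == (z, i)); rewrite ?orbT.
Qed.

Lemma sig1_comm_nseq c k : beq (c ++ [:: (0%N, true)]) ((0%N, true) :: c) ->
  beq (c ++ nseq k (0%N, true)) (nseq k (0%N, true) ++ c).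
Proof.
move=> H; elim: k => [|k IH] /=; first by rewrite cats0; exact: beq_refl.
rewrite -cat1s catA; apply: beq_trans (beq_catr _ H) _.
rewrite /= -cat1s -[(0%N,true) :: _ ++ _]cat1s; apply: beq_catl; exact: IH.
Qed.

Lemma cg_K k : (k < size cg)%N -> K (nth [::] cg k).
Proof.
move=> Hk; case/andP: Hcg => _ /allP /(_ k); rewrite mem_iota add0n Hk => /(_ isT).
set c := nth [::] cg k; set toks := nth [::] ccert k.
move=> /and4P[Vc Hrel Hok /eqP Ef].
have Hflat : beq (flatten (map tword toks)) [::] /\ valid (flatten (map tword toks)).
  elim: toks Hrel Hok {Ef} => [|t toks IH] /=; first by split=> //; exact: beq_refl.
  case: t => //= u k' i j s Hrel' /andP[/andP[Vu Hr'] Hok] .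
  have [IH1 IH2] := IH Hrel' Hok; split.
    have := beq_cat (TRel_beq s Vu Hr') IH1; by [].
  rewrite valid_cat IH2 andbT !valid_cat valid_inv Vu /=.
  have := relw'_beq s Hr' => /beq_valid ->; by [].
case: Hflat => F1 F2.
have V1 : valid (c ++ [:: (0%N, true)] ++ inv_word c ++ [:: (0%N, false)]).
  by rewrite !valid_cat valid_inv Vc /= Hn.
have B : beq (c ++ [:: (0%N, true)] ++ inv_word c ++ [:: (0%N, false)]) [::].
  apply: beq_trans (beq_fred_eq V1 F2 Ef) F1.
have Hcomm : beq (c ++ [:: (0%N, true)]) ((0%N, true) :: c).
  have E1 : beq ((c ++ [:: (0%N, true)] ++ inv_word c ++ [:: (0%N, false)]) ++ ((0%N, true) :: c))
                ((0%N, true) :: c).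
    have := beq_catr ((0%N, true) :: c) B; by [].
  apply: beq_trans _ E1; apply: beq_sym.
  have -> : (c ++ [:: (0%N, true)] ++ inv_word c ++ [:: (0%N, false)]) ++ ((0%N, true) :: c) =
     (c ++ [:: (0%N, true)] ++ inv_word c) ++ ([:: (0%N, false)] ++ [:: (0%N, true)]) ++ c.
    by rewrite -!catA.
  have Vl : valid [:: (0%N, true)] by rewrite /= Hn.
  have := cancel_mid (c ++ [:: (0%N, true)] ++ inv_word c) c Vl; rewrite /inv_word /= => H1.
  apply: beq_trans H1 _.
  rewrite -!catA; have := cancel_mid (c ++ [:: (0%N, true)]) [::] Vc; rewrite !cats0 -!catA.
  exact.
apply: (K_comm Hn Vc); exact: sig1_comm_nseq.
Qed.

Lemma entry_K z i : (z < r)%N -> (i < n.-1)%N -> K (entryw z i).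
Proof.
move=> Hz Hi; case/andP: He => Hc /allP /(_ z); rewrite mem_iota add0n Hz => /(_ isT) /allP /(_ i).
rewrite mem_iota add0n Hi => /(_ isT) Hm.
have Hd : forall p, p \in [::] -> K (entryw p.1 p.2) by [].
exact: (checkE_K cg_K Hc Hd Hm).
Qed.

Lemma letter_K l z : (l.1 < n.-1)%N -> (z < r)%N -> K (inv_word (tsn (pl l z)) ++ [:: l] ++ tsn z).
Proof.
case: l => i [] /= Hi Hz; first exact: entry_K.
have Hz' : (pl (i, false) z < r)%N by apply: pl_lt.
have := K_inv Hn (entry_K Hz' Hi).
have E : pl (i, true) (pl (i, false) z) = z by have := pl_inv (l := (i, false)) z Hi.
rewrite /entryw E inv_word_cat inv_wordK inv_word_cons -catA; by [].
Qed.

Lemma schreier g y : valid g -> (y < r)%N -> K (inv_word (tsn (act g y)) ++ g ++ tsn y).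
Proof.
elim: g => [_|l g IH /andP[Hl Hg]] Hy /=.
  apply: (K_beq Hn (K_nil m Hn)); apply: beq_sym; exact: beq_cancel' (tsn_valid y).
have Hz : (act g y < r)%N by apply: act_lt.
have := K_cat Hn (letter_K Hl Hz) (IH Hg Hy) => H; apply: (K_beq Hn H).
set z := act g y.
have -> : (inv_word (tsn (pl l z)) ++ [:: l] ++ tsn z) ++ inv_word (tsn z) ++ g ++ tsn y =
   (inv_word (tsn (pl l z)) ++ [:: l]) ++ (tsn z ++ inv_word (tsn z)) ++ (g ++ tsn y).
  by rewrite -!catA.
apply: beq_trans (cancel_mid' _ _ (tsn_valid z)) _; rewrite -!catA; exact: beq_refl.
Qed.


Definition cwt (ys : seq (nat * bool)) : word := flatten [seq conjw (tsn q.1) q.2 | q <- ys].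

Lemma conjw_valid g s : valid g -> valid (conjw g s).
Proof. by move=> V; rewrite /conjw !valid_cat valid_inv V (valid_xw m Hn). Qed.
Lemma conjw_IN g s : valid g -> IN (conjw g s).
Proof. move=> V; exact: (IN_conj Hn V (gx_x m Hn s)). Qed.
Lemma cwt_IN ys : IN (cwt ys).
Proof.
elim: ys => [|q ys IH] /=; first exact: ps_nil.
apply: IN_cat IH; apply: conjw_IN; exact: tsn_valid.
Qed.
Lemma cwt_cat a b : cwt (a ++ b) = cwt a ++ cwt b.
Proof. by rewrite /cwt map_cat flatten_cat. Qed.

Lemma cnt_cat a b y : cnt (a ++ b) y = cnt a y + cnt b y.
Proof. elim: a => [|q a IH] /=; first by rewrite add0r. by rewrite IH addrA. Qed.

Lemma partner y s ys : cnt ((y, s) :: ys) y = 0 -> (y, ~~ s) \in ys.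
Proof.
move=> H; apply/negPn/negP => Hn'.
have Hsg : if s then 0 <= cnt ys y else cnt ys y <= 0.
  elim: ys Hn' {H} => [|[y' s'] ys IH] /=; first by case: s.
  rewrite in_cons negb_or => /andP[H1 H2]; have := IH H2.
  case: eqP => [E|_]; last by rewrite add0r.
  subst y'; have Hs : s' = s.
    by move: H1; clear IH H2; case: s; case: s'; rewrite ?eqxx.
  subst s'; clear IH H1 H2; rewrite /sg; case: s => /=; lia.
move: H Hsg {Hn'} => /=; rewrite eqxx /sg; case: s => /= H Hsg; lia.
Qed.

Lemma conj_pair_beq t s : valid t -> beq (conjw t s ++ conjw t (~~ s)) [::].
Proof.
move=> V; rewrite /conjw.
have -> : (t ++ xw s ++ inv_word t) ++ t ++ xw (~~ s) ++ inv_word t =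
   (t ++ xw s) ++ (inv_word t ++ t) ++ (xw (~~ s) ++ inv_word t) by rewrite -!catA.
apply: beq_trans (cancel_mid _ _ V) _.
rewrite -inv_xw.
have -> : (t ++ xw s) ++ inv_word (xw s) ++ inv_word t = t ++ (xw s ++ inv_word (xw s)) ++ inv_word t.
  by rewrite -!catA.
apply: beq_trans (cancel_mid' _ _ (valid_xw m Hn s)) _; exact: beq_cancel.
Qed.

Lemma CN_valid w : CN w -> valid w. Proof. by case. Qed.

Lemma E_CN a b : E n m a b -> CN b -> CN a.
Proof.
move=> H1 H2; have := CN_cat H1 H2 => H3; apply: CN_beq H3 _; rewrite -catA.
have := cancel_mid a [::] (CN_valid H2); rewrite !cats0; exact.
Qed.

Lemma cancel_CN k ys : (size ys <= k)%N -> (forall y, cnt ys y = 0) -> CN (cwt ys).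
Proof.
elim: k ys => [|k IH] [|[y s] ys] //= Hsz Hc; try exact: ps_nil.
have Hp : (y, ~~ s) \in ys by apply: partner; exact: Hc.
case/splitPr: Hp Hsz Hc => A1 B1 Hsz Hc.
have VA : valid (cwt A1) by apply: IN_valid; exact: cwt_IN.
have VB : valid (cwt B1) by apply: IN_valid; exact: cwt_IN.
have Vt := tsn_valid y.
set c := conjw (tsn y) s; set c' := conjw (tsn y) (~~ s).
have Vc : valid c by exact: conjw_valid.
have Vc' : valid c' by exact: conjw_valid.
have -> : cwt ((y, s) :: A1 ++ (y, ~~ s) :: B1) = c ++ (cwt A1 ++ c') ++ cwt B1.
  by rewrite /cwt /= map_cat flatten_cat /= -!catA.
apply: (E_CN (b := cwt (A1 ++ B1))).
  apply: (E_trans (b := c ++ (c' ++ cwt A1) ++ cwt B1)).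
  - by rewrite valid_cat Vc valid_cat valid_cat Vc' VA VB.
  - apply: (E_catl Hn Vc); apply: (E_catr VB); apply: E_comm; first exact: cwt_IN.
    exact: conjw_IN.
  - apply: E_beq; first by rewrite valid_cat Vc valid_cat valid_cat Vc' VA VB.
    have Eq : forall x1 x2 x3 x4 : word, x1 ++ (x2 ++ x3) ++ x4 = (x1 ++ x2) ++ x3 ++ x4.
      by move=> *; rewrite -!catA.
    rewrite cwt_cat Eq; exact: (beq_catr (cwt A1 ++ cwt B1) (conj_pair_beq s Vt)).
apply: IH.
  by move: Hsz; rewrite !size_cat /=; lia.
move=> y'; have := Hc y'; rewrite /= cnt_cat /= cnt_cat.
have := sgN s; case: eqP => _; lia.
Qed.

Lemma E_conj_t g s : valid g -> E n m (conjw g s) (conjw (tsn (act g 0)) s).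
Proof.
move=> V; set y := act g 0; set t := tsn y.
have Vt : valid t by exact: tsn_valid.
have Hy : (y < r)%N by apply: act_lt.
have Kh : K (inv_word t ++ g).
  have := schreier V Hr; by rewrite tsn0 cats0.
have H1 := K_E Hn s Kh.
have H2 := E_conj Hn Vt H1.
have Vm : valid (t ++ ((inv_word t ++ g) ++ xw s ++ inv_word (inv_word t ++ g)) ++ inv_word t).
  by rewrite !(valid_cat, valid_inv) Vt V (valid_xw m Hn).
apply: E_trans Vm _ H2.
apply: E_beq; first exact: conjw_valid.
apply: beq_sym; rewrite inv_word_cat inv_wordK -!catA.
have := cancel_mid' [::] (g ++ xw s ++ inv_word g ++ t ++ inv_word t) Vt.
rewrite /= -!catA => B1; apply: beq_trans B1 _.
have := cancel_mid' (g ++ xw s ++ inv_word g) [::] Vt; rewrite !cats0 -!catA; exact.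
Qed.

Lemma E_cw gs : all (fun p => valid p.1) gs -> E n m (cw gs) (cwt (ysof gs)).
Proof.
elim: gs => [_|p gs IH /andP[H1 H2]] /=; first exact: (E_refl m).
apply: (E_cat Hn); [exact: conjw_valid (tsn_valid _) | exact: cw_valid | exact: E_conj_t | exact: IH].
Qed.

Lemma cnt_out ys y : all (fun q => (q.1 < r)%N) ys -> (r <= y)%N -> cnt ys y = 0.
Proof.
move=> H Hy; elim: ys H => //= q ys IH /andP[Hq H]; rewrite IH // addr0.
case: eqP => // E; move: Hq; rewrite E; lia.
Qed.

Lemma kernel w : IN w -> phi w = 0 -> CN w.
Proof.
move=> Hw H0; have [gs [Vgs B]] := IN_struct Hw.
have Hc : forall y, cnt (ysof gs) y = 0.
  move=> y; case: (ltnP y r) => Hy.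
    have := congr1 (fun M : 'rV[int]_r => M ord0 (Ordinal Hy)) H0; rewrite !mxE /=.
    rewrite (beq_dd _ B); have [_ ->] := cw_facts y Vgs; rewrite mulKz //.
  apply: cnt_out Hy; apply/allP => q /mapP [p _ ->] /=; exact: act_lt.
have := cancel_CN (leqnn _) Hc => HC.
have := E_CN (E_cw Vgs) HC => HC2.
apply: CN_beq HC2 _; exact: beq_sym.
Qed.

Definition vf (v : 'rV[int]_r) (y : nat) : int := if insub y is Some i then v ord0 i else 0.
Definition gsv (v : 'rV[int]_r) : seq (word * bool) :=
  flatten [seq nseq `|vf v y|%N (tsn y, (0 <= vf v y)) | y <- iota 0 r].

Lemma cnt_nseq k y s i : cnt (nseq k (y, s)) i = if y == i then (k%:Z * sg s) else 0.
Proof.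
elim: k => [|k IH] /=; first by case: eqP; rewrite ?mul0r.
rewrite IH; case: eqP => _; last by rewrite addr0.
by rewrite -[k.+1]addn1 PoszD mulrDl mul1r addrC.
Qed.

Lemma abs_sg z : (`|z|%N)%:Z * sg (0 <= z) = z.
Proof. case: z => k /=; first by rewrite mulr1. by rewrite /sg /= mulrN1 NegzE. Qed.

Lemma cnt_gsv_gen v a k i : (a + k <= r)%N ->
  cnt (ysof (flatten [seq nseq `|vf v y|%N (tsn y, (0 <= vf v y)) | y <- iota a k])) i =
  if (a <= i < a + k)%N then vf v i else 0.
Proof.
elim: k a => [|k IH] a Hk /=; first by rewrite addn0; case: (boolP (a <= i < a)%N) => // /andP[H1 H2]; lia.
rewrite /ysof map_cat cnt_cat -/(ysof _) IH; last by rewrite addSnnS.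
rewrite /ysof map_nseq /= act_tsn; last by move: Hk; lia.
rewrite cnt_nseq abs_sg addSnnS.
case: (ltngtP a i) => H //=; rewrite ?add0r ?addr0 //.
by subst; rewrite addnS ltnS leq_addr.
Qed.

Lemma gsv_valid v : all (fun p => valid p.1) (gsv v).
Proof.
rewrite /gsv; elim: (iota 0 r) => //= y ys IH; rewrite all_cat IH andbT.
by rewrite all_nseq tsn_valid orbT.
Qed.

Lemma phi_gsv v : phi (cw (gsv v)) = v.
Proof.
apply/rowP => i; rewrite mxE; have [_ ->] := cw_facts i (gsv_valid v).
rewrite mulKz // cnt_gsv_gen; last by rewrite add0n.
rewrite add0n ltn_ord /vf valK.
by rewrite [ord0]ord1.
Qed.


Theorem generic : H1_normal_closure_free_of_rank n m r.
Proof.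
exists phi; split; [|split; [|split]].
- move=> w1 w2 _ _ B; exact: phi_beq.
- move=> w1 w2 /(INN_iff n m) H1 /(INN_iff n m) H2; exact: phi_add.
- move=> v; exists (cw (gsv v)); split; last exact: phi_gsv.
  split; first exact: cw_valid (gsv_valid v).
  exists (gsv v); split; [exact: gsv_valid | exact: beq_refl].
- move=> w /(INN_iff n m) Hw; split => [H0|/(NN_iff n m) H].
    apply/(NN_iff n m); exact: kernel.
  exact: phi_CN.
Qed.

End Data.

Definition all_ok n m r tbl tblinv A Lsc ts cg ccert ecert : bool :=
  [&& (0 < n.-1)%N, (0 < r)%N, Lsc != 0,
      rows_ok r tbl tblinv A, rels_ok n r tbl tblinv A,
      x_ok m r tbl tblinv A Lsc,
      ts_ok n r tbl tblinv ts, cg_ok n m tbl tblinv ts cg ccert &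
      ecert_ok n m r tbl tblinv ts cg ecert].

Theorem generic_ok n m r tbl tblinv A Lsc ts cg ccert ecert :
  all_ok n m r tbl tblinv A Lsc ts cg ccert ecert -> H1_normal_closure_free_of_rank n m r.
Proof.
move=> /andP[H1 /andP[H2 /andP[H3 /andP[H4 /andP[H5 /andP[H6 /andP[H7 /andP[H8 H9]]]]]]]].
exact: (generic H1 H4 H5 H6 H3 H2 H7 H8 H9).
Qed.

Import GRing.Theory.
Local Open Scope ring_scope.

Definition dec (s : seq nat) : word := map (fun k => (k./2, ~~ odd k)) s.
Definition tbl_33 : seq (seq nat) := [:: [:: 0; 2; 3; 1]; [:: 1; 3; 2; 0]].
Definition tbi_33 : seq (seq nat) := [:: [:: 0; 3; 1; 2]; [:: 3; 0; 2; 1]].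
Definition A_33 : seq (seq int) := [:: [:: 2%:Z; 1%:Z; (- 1%:Z); 0%:Z]; [:: 0%:Z; 0%:Z; 2%:Z; 0%:Z]].
Definition ts_33 : seq word := [:: dec [:: ]; dec [:: 2]; dec [:: 0; 2]; dec [:: 3]].
Definition cg_33 : seq word := [:: dec [:: 0]; dec [:: 2; 0; 0; 2]].
Definition cc_33 : seq (seq tok) := [:: [:: ]; [:: TRel (dec [:: 2; 0]) true 0 0 true; TRel (dec [:: ]) true 0 0 false]].
Definition ec_33 : seq (nat * nat * seq tok) :=
  [:: (0, 0, [:: TC 0 true]);
  (0, 1, [:: ]);
  (3, 1, [:: ]);
  (1, 0, [:: ]);
  (2, 0, [:: TRef 3 1 false; TC 1 true; TRef 0 1 false; TRef 1 0 false]);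
  (2, 1, [:: TRef 2 0 false; TRef 3 1 false; TRel (dec [:: ]) true 0 0 false; TRef 0 0 true; TRef 3 1 true; TRef 2 0 true]);
  (3, 0, [:: TX (dec [:: 3]) true; TRef 1 0 false; TRef 2 0 false]);
  (1, 1, [:: TRef 3 0 false; TRel (dec [:: 3]) true 0 0 true; TRef 0 1 true; TRef 0 0 true; TRef 3 1 true; TRef 3 0 false])].
Lemma ok_33 : all_ok 3 3 4 tbl_33 tbi_33 A_33 6%:Z ts_33 cg_33 cc_33 ec_33.
Proof. vm_compute. reflexivity. Qed.

Definition tbl_34 : seq (seq nat) := [:: [:: 0; 2; 3; 4; 1; 5]; [:: 1; 5; 2; 0; 4; 3]].
Definition tbi_34 : seq (seq nat) := [:: [:: 0; 4; 1; 2; 3; 5]; [:: 3; 0; 2; 5; 4; 1]].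
Definition A_34 : seq (seq int) := [:: [:: 1%:Z; 1%:Z; (- 1%:Z); 0%:Z; 0%:Z; 0%:Z]; [:: 0%:Z; 0%:Z; 1%:Z; 0%:Z; 0%:Z; 0%:Z]].
Definition ts_34 : seq word := [:: dec [:: ]; dec [:: 2]; dec [:: 0; 2]; dec [:: 3]; dec [:: 1; 2]; dec [:: 2; 2]].
Definition cg_34 : seq word := [:: dec [:: 0]; dec [:: 2; 0; 0; 2]].
Definition cc_34 : seq (seq tok) := [:: [:: ]; [:: TRel (dec [:: 2; 0]) true 0 0 true; TRel (dec [:: ]) true 0 0 false]].
Definition ec_34 : seq (nat * nat * seq tok) :=
  [:: (0, 0, [:: TC 0 true]);
  (0, 1, [:: ]);
  (3, 1, [:: ]);
  (1, 0, [:: ]);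
  (2, 0, [:: TRef 3 1 false; TC 1 true; TRef 0 1 false; TRef 1 0 false]);
  (2, 1, [:: TRef 2 0 false; TRef 3 1 false; TRel (dec [:: ]) true 0 0 false; TRef 0 0 true; TRef 3 1 true; TRef 2 0 true]);
  (4, 0, [:: ]);
  (3, 0, [:: TRef 4 0 false; TX (dec [:: 3]) true; TRef 1 0 false; TRef 2 0 false]);
  (4, 1, [:: TRef 4 0 false; TRel (dec [:: 3]) true 0 0 true; TRef 0 1 true; TRef 0 0 true; TRef 3 1 true; TRef 3 0 false]);
  (1, 1, [:: ]);
  (5, 0, [:: TRel (dec [:: 3; 3]) true 0 0 true; TRef 1 1 true; TRef 4 0 true; TRef 4 1 true; TRef 4 0 false; TRef 1 1 false]);
  (5, 1, [:: TRel (dec [:: 2]) true 0 0 false; TRef 2 0 true; TRef 2 1 true; TRef 1 0 true; TRef 1 1 false; TRef 5 0 false])].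
Lemma ok_34 : all_ok 3 4 6 tbl_34 tbi_34 A_34 4%:Z ts_34 cg_34 cc_34 ec_34.
Proof. vm_compute. reflexivity. Qed.

Definition tbl_35 : seq (seq nat) := [:: [:: 0; 2; 3; 4; 5; 1; 7; 8; 10; 6; 9; 11]; [:: 1; 6; 2; 0; 5; 9; 7; 3; 4; 11; 10; 8]].
Definition tbi_35 : seq (seq nat) := [:: [:: 0; 5; 1; 2; 3; 4; 9; 6; 7; 10; 8; 11]; [:: 3; 0; 2; 7; 8; 4; 1; 6; 11; 5; 10; 9]].
Definition A_35 : seq (seq int) := [:: [:: 2%:Z; 1%:Z; (- 3%:Z); 0%:Z; 1%:Z; 1%:Z; 0%:Z; (- 1%:Z); 0%:Z; 1%:Z; 0%:Z; 0%:Z]; [:: 0%:Z; 0%:Z; 2%:Z; 0%:Z; 0%:Z; 0%:Z; 0%:Z; 0%:Z; 0%:Z; 0%:Z; 0%:Z; 0%:Z]].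
Definition ts_35 : seq word := [:: dec [:: ]; dec [:: 2]; dec [:: 0; 2]; dec [:: 3]; dec [:: 0; 3]; dec [:: 1; 2]; dec [:: 2; 2]; dec [:: 3; 3]; dec [:: 3; 0; 3]; dec [:: 2; 1; 2]; dec [:: 0; 3; 0; 3]; dec [:: 3; 3; 0; 3]].
Definition cg_35 : seq word := [:: dec [:: 0]; dec [:: 2; 0; 0; 2]].
Definition cc_35 : seq (seq tok) := [:: [:: ]; [:: TRel (dec [:: 2; 0]) true 0 0 true; TRel (dec [:: ]) true 0 0 false]].
Definition ec_35 : seq (nat * nat * seq tok) :=
  [:: (0, 0, [:: TC 0 true]);
  (0, 1, [:: ]);
  (3, 1, [:: ]);
  (1, 0, [:: ]);
  (2, 0, [:: TRef 3 1 false; TC 1 true; TRef 0 1 false; TRef 1 0 false]);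
  (2, 1, [:: TRef 2 0 false; TRef 3 1 false; TRel (dec [:: ]) true 0 0 false; TRef 0 0 true; TRef 3 1 true; TRef 2 0 true]);
  (5, 0, [:: ]);
  (1, 1, [:: ]);
  (3, 0, [:: ]);
  (4, 1, [:: TRef 5 0 false; TRel (dec [:: 3]) true 0 0 true; TRef 0 1 true; TRef 0 0 true; TRef 3 1 true; TRef 3 0 false]);
  (4, 0, [:: TRef 5 0 false; TX (dec [:: 3]) true; TRef 1 0 false; TRef 2 0 false; TRef 3 0 false]);
  (7, 1, [:: ]);
  (6, 0, [:: TRef 7 1 false; TRel (dec [:: 2]) true 0 0 false; TRef 2 0 true; TRef 2 1 true; TRef 1 0 true; TRef 1 1 false]);
  (8, 1, [:: ]);
  (7, 0, [:: TRef 8 1 false; TRef 4 0 false; TRel (dec [:: 3; 0]) true 0 0 true; TRef 4 1 true; TRef 3 0 true; TRef 7 1 true]);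
  (6, 1, [:: TRef 7 0 false; TRef 8 1 false; TRel (dec [:: 2; 1]) true 0 0 false; TRef 3 0 true; TRef 7 1 true; TRef 6 0 true]);
  (5, 1, [:: ]);
  (9, 0, [:: TRel (dec [:: 3; 3]) true 0 0 true; TRef 1 1 true; TRef 5 0 true; TRef 4 1 true; TRef 4 0 false; TRef 5 1 false]);
  (8, 0, [:: ]);
  (10, 0, [:: TRef 9 0 false; TX (dec [:: 3; 3]) true; TRef 6 0 false; TRef 7 0 false; TRef 8 0 false]);
  (10, 1, [:: TRef 10 0 false; TRel (dec [:: 3; 0; 3]) true 0 0 true; TRef 5 1 true; TRef 4 0 true; TRef 8 1 true; TRef 8 0 false]);
  (11, 1, [:: ]);
  (11, 0, [:: TRef 11 1 false; TRef 8 0 false; TRel (dec [:: 2; 1; 2; 1]) true 0 0 true; TRef 10 1 true; TRef 8 0 true; TRef 11 1 true]);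
  (9, 1, [:: TRef 11 0 false; TRef 11 1 false; TRel (dec [:: 2; 1; 2]) true 0 0 false; TRef 7 0 true; TRef 6 1 true; TRef 9 0 true])].
Lemma ok_35 : all_ok 3 5 12 tbl_35 tbi_35 A_35 10%:Z ts_35 cg_35 cc_35 ec_35.
Proof. vm_compute. reflexivity. Qed.

Definition tbl_43 : seq (seq nat) := [:: [:: 0; 2; 3; 1; 5; 8; 7; 10; 4; 9; 6; 11]; [:: 1; 3; 2; 0; 4; 11; 5; 7; 10; 8; 9; 6]; [:: 0; 7; 10; 6; 3; 1; 4; 5; 2; 9; 8; 11]].
Definition tbi_43 : seq (seq nat) := [:: [:: 0; 3; 1; 2; 8; 4; 10; 6; 5; 9; 7; 11]; [:: 3; 0; 2; 1; 4; 6; 11; 7; 9; 10; 8; 5]; [:: 0; 5; 8; 4; 6; 7; 3; 1; 10; 9; 2; 11]].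
Definition A_43 : seq (seq int) := [:: [:: 2%:Z; 1%:Z; 0%:Z; (- 1%:Z); (- 1%:Z); 1%:Z; (- 1%:Z); 1%:Z; 0%:Z; 0%:Z; 0%:Z; 0%:Z]; [:: 0%:Z; 0%:Z; 2%:Z; 0%:Z; 0%:Z; 0%:Z; 0%:Z; 0%:Z; (- 1%:Z); 0%:Z; 1%:Z; 0%:Z]; [:: 0%:Z; 0%:Z; 0%:Z; 0%:Z; 0%:Z; 0%:Z; 0%:Z; 0%:Z; 0%:Z; 2%:Z; 0%:Z; 0%:Z]].
Definition ts_43 : seq word := [:: dec [:: ]; dec [:: 2]; dec [:: 0; 2]; dec [:: 3]; dec [:: 5; 3]; dec [:: 5; 2]; dec [:: 4; 3]; dec [:: 4; 2]; dec [:: 5; 0; 2]; dec [:: 3; 5; 0; 2]; dec [:: 4; 0; 2]; dec [:: 2; 5; 2]].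
Definition cg_43 : seq word := [:: dec [:: 0]; dec [:: 4]; dec [:: 2; 0; 0; 2]].
Definition cc_43 : seq (seq tok) := [:: [:: ]; [:: TRel (dec [:: ]) false 0 2 false]; [:: TRel (dec [:: 2; 0]) true 0 0 true; TRel (dec [:: ]) true 0 0 false]].
Definition ec_43 : seq (nat * nat * seq tok) :=
  [:: (0, 0, [:: TC 0 true]);
  (0, 2, [:: TC 1 true]);
  (0, 1, [:: ]);
  (3, 1, [:: ]);
  (1, 0, [:: ]);
  (2, 0, [:: TRef 3 1 false; TC 2 true; TRef 0 1 false; TRef 1 0 false]);
  (2, 1, [:: TRef 2 0 false; TRef 3 1 false; TRel (dec [:: ]) true 0 0 false; TRef 0 0 true; TRef 3 1 true; TRef 2 0 true]);
  (3, 0, [:: TX (dec [:: 3]) true; TRef 1 0 false; TRef 2 0 false]);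
  (1, 1, [:: TRef 3 0 false; TRel (dec [:: 3]) true 0 0 true; TRef 0 1 true; TRef 0 0 true; TRef 3 1 true; TRef 3 0 false]);
  (1, 2, [:: ]);
  (7, 1, [:: TRel (dec [:: 3; 5]) true 1 0 true; TRef 1 2 true; TRef 0 1 true; TRef 0 2 true; TRef 0 1 false; TRef 1 2 false]);
  (5, 2, [:: ]);
  (2, 2, [:: ]);
  (7, 0, [:: TRel (dec [:: 3; 1; 5]) false 0 2 true; TRef 2 2 true; TRef 1 0 true; TRef 1 2 false]);
  (8, 2, [:: ]);
  (5, 0, [:: TRef 8 2 false; TRel (dec [:: 3; 1]) false 0 2 false; TRef 1 0 true; TRef 5 2 true]);
  (3, 2, [:: ]);
  (6, 1, [:: TRef 5 2 false; TRel (dec [:: 3]) true 1 0 false; TRef 0 1 true; TRef 0 2 true; TRef 3 1 true; TRef 3 2 false]);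
  (6, 0, [:: TRel (dec [:: 3; 5]) false 0 2 true; TRef 1 2 true; TRef 3 0 true; TRef 3 2 false]);
  (10, 0, [:: TRef 6 0 false; TX (dec [:: 3; 5]) true; TRef 7 0 false]);
  (7, 2, [:: TRel (dec [:: 3; 4]) true 1 0 false; TRef 6 1 true; TRef 3 2 true; TRef 1 1 true; TRef 1 2 false; TRef 7 1 false]);
  (8, 1, [:: TRel (dec [:: 3; 1; 5]) true 0 0 false; TRef 7 0 true; TRef 7 1 true; TRef 6 0 true; TRef 6 1 false; TRef 5 0 false]);
  (10, 2, [:: TRef 8 1 false; TRel (dec [:: 3; 1; 5]) true 1 0 true; TRef 2 2 true; TRef 2 1 true; TRef 8 2 true; TRef 8 1 false]);
  (4, 2, [:: ]);
  (4, 1, [:: TRef 4 2 false; TRef 3 1 false; TRel (dec [:: ]) true 1 0 true; TRef 0 2 true; TRef 3 1 true; TRef 4 2 true]);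
  (4, 0, [:: TRef 5 2 false; TRel (dec [:: 3]) false 0 2 false; TRef 3 0 true; TRef 4 2 true]);
  (8, 0, [:: TRef 4 2 false; TRel (dec [:: 2]) false 0 2 false; TRef 2 0 true; TRef 8 2 true]);
  (6, 2, [:: TRef 4 1 false; TRef 4 2 false; TRel (dec [:: 2]) true 1 0 false; TRef 1 1 true; TRef 5 2 true; TRef 6 1 true]);
  (5, 1, [:: ]);
  (11, 0, [:: TRel (dec [:: 3; 4; 3]) true 0 0 true; TRef 5 1 true; TRef 4 0 true; TRef 4 1 true; TRef 4 0 false; TRef 5 1 false]);
  (11, 2, [:: TRel (dec [:: 3; 4; 3]) true 1 0 false; TRef 5 1 true; TRef 7 2 true; TRef 7 1 true; TRef 7 2 false; TRef 5 1 false]);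
  (11, 1, [:: TRel (dec [:: 2; 5]) true 0 0 false; TRef 10 0 true; TRef 8 1 true; TRef 5 0 true; TRef 5 1 false; TRef 11 0 false]);
  (9, 1, [:: ]);
  (9, 2, [:: TRef 9 1 false; TRef 8 2 false; TRel (dec [:: 3; 1]) true 1 0 false; TRef 2 1 true; TRef 8 2 true; TRef 9 1 true]);
  (10, 1, [:: TRef 9 2 false; TRef 9 1 false; TRel (dec [:: 3; 1; 4]) true 1 0 true; TRef 10 2 true; TRef 8 1 true; TRef 10 2 true]);
  (9, 0, [:: TRef 9 1 false; TRef 8 0 false; TRel (dec [:: 2; 4]) true 0 0 true; TRef 4 1 true; TRef 8 0 true; TRef 9 1 true])].
Lemma ok_43 : all_ok 4 3 12 tbl_43 tbi_43 A_43 6%:Z ts_43 cg_43 cc_43 ec_43.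
Proof. vm_compute. reflexivity. Qed.

Definition tbl_53 : seq (seq nat) := [:: [:: 0; 2; 3; 1; 5; 9; 8; 11; 12; 4; 10; 13; 6; 7; 14; 17; 18; 25; 19; 16; 20; 23; 28; 29; 24; 15; 26; 27; 30; 21; 22; 31; 32; 39; 34; 35; 36; 33; 38; 37]; [:: 1; 3; 2; 0; 4; 14; 5; 20; 8; 12; 9; 19; 10; 13; 6; 15; 7; 32; 18; 24; 16; 17; 37; 23; 11; 29; 26; 25; 28; 27; 31; 33; 21; 30; 22; 35; 36; 34; 38; 39]; [:: 0; 8; 12; 6; 3; 1; 4; 7; 5; 2; 10; 11; 9; 13; 14; 16; 30; 18; 22; 28; 36; 21; 17; 23; 27; 19; 24; 26; 25; 29; 15; 20; 34; 33; 35; 32; 31; 37; 38; 39]; [:: 0; 1; 2; 3; 15; 17; 21; 5; 23; 25; 27; 9; 29; 4; 32; 13; 6; 7; 8; 12; 14; 16; 22; 18; 10; 11; 26; 24; 28; 19; 30; 31; 20; 33; 34; 38; 35; 37; 36; 39]].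
Definition tbi_53 : seq (seq nat) := [:: [:: 0; 3; 1; 2; 9; 4; 12; 13; 6; 5; 10; 7; 8; 11; 14; 25; 19; 15; 16; 18; 20; 29; 30; 21; 24; 17; 26; 27; 22; 23; 28; 31; 32; 37; 34; 35; 36; 39; 38; 33]; [:: 3; 0; 2; 1; 4; 6; 14; 16; 8; 10; 12; 24; 9; 13; 5; 15; 20; 21; 18; 11; 7; 32; 34; 23; 19; 27; 26; 29; 28; 25; 33; 30; 17; 31; 37; 35; 36; 22; 38; 39]; [:: 0; 5; 9; 4; 6; 8; 3; 7; 1; 12; 10; 11; 2; 13; 14; 30; 15; 22; 17; 25; 31; 21; 18; 23; 26; 28; 27; 24; 19; 29; 16; 36; 35; 33; 32; 34; 20; 37; 38; 39]; [:: 0; 1; 2; 3; 13; 7; 16; 17; 18; 11; 24; 25; 19; 15; 20; 4; 21; 5; 23; 29; 32; 6; 22; 8; 27; 9; 26; 10; 28; 12; 30; 31; 14; 33; 34; 36; 38; 37; 35; 39]].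
Definition A_53 : seq (seq int) := [:: [:: 2%:Z; 1%:Z; (- 1%:Z); 0%:Z; 0%:Z; 1%:Z; 0%:Z; 1%:Z; 1%:Z; (- 1%:Z); 0%:Z; (- 1%:Z); (- 1%:Z); 0%:Z; 0%:Z; 0%:Z; 0%:Z; 1%:Z; 1%:Z; (- 1%:Z); 0%:Z; 0%:Z; 1%:Z; 1%:Z; 0%:Z; (- 1%:Z); 0%:Z; 0%:Z; (- 1%:Z); (- 1%:Z); 0%:Z; 0%:Z; 0%:Z; (- 1%:Z); 0%:Z; 0%:Z; 0%:Z; 1%:Z; 0%:Z; 0%:Z]; [:: 0%:Z; 0%:Z; 2%:Z; 0%:Z; 0%:Z; 0%:Z; 0%:Z; 0%:Z; 0%:Z; (- 1%:Z); 0%:Z; (- 1%:Z); 1%:Z; 0%:Z; 0%:Z; 0%:Z; 0%:Z; 0%:Z; 0%:Z; 1%:Z; 0%:Z; 0%:Z; 0%:Z; 0%:Z; 0%:Z; (- 1%:Z); 0%:Z; 0%:Z; 0%:Z; 1%:Z; 0%:Z; 0%:Z; 0%:Z; 0%:Z; 0%:Z; 0%:Z; 0%:Z; 0%:Z; 0%:Z; 0%:Z]; [:: 0%:Z; 0%:Z; 0%:Z; 0%:Z; 0%:Z; 0%:Z; 0%:Z; 0%:Z; 0%:Z; 0%:Z; 2%:Z; 0%:Z; 0%:Z; 0%:Z; 0%:Z; 0%:Z; 0%:Z; 0%:Z; 0%:Z; 0%:Z; 0%:Z; 0%:Z; 0%:Z; 0%:Z; (- 1%:Z); 0%:Z; 0%:Z;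 1%:Z; 0%:Z; 0%:Z; 0%:Z; 0%:Z; 0%:Z; 0%:Z; 0%:Z; 0%:Z; 0%:Z; 0%:Z; 0%:Z; 0%:Z]; [:: 0%:Z; 0%:Z; 0%:Z; 0%:Z; 0%:Z; 0%:Z; 0%:Z; 0%:Z; 0%:Z; 0%:Z; 0%:Z; 0%:Z; 0%:Z; 0%:Z; 0%:Z; 0%:Z; 0%:Z; 0%:Z; 0%:Z; 0%:Z; 0%:Z; 0%:Z; 0%:Z; 0%:Z; 0%:Z; 0%:Z; 2%:Z; 0%:Z; 0%:Z; 0%:Z; 0%:Z; 0%:Z; 0%:Z; 0%:Z; 0%:Z; 0%:Z; 0%:Z; 0%:Z; 0%:Z; 0%:Z]].
Definition ts_53 : seq word := [:: dec [:: ]; dec [:: 2]; dec [:: 0; 2]; dec [:: 3]; dec [:: 5; 3]; dec [:: 5; 2]; dec [:: 4; 3]; dec [:: 7; 5; 2]; dec [:: 4; 2]; dec [:: 5; 0; 2]; dec [:: 3; 5; 0; 2]; dec [:: 0; 7; 5; 2]; dec [:: 4; 0; 2]; dec [:: 7; 5; 3]; dec [:: 2; 5; 2]; dec [:: 6; 5; 3]; dec [:: 7; 4; 3]; dec [:: 6; 5; 2]; dec [:: 7; 4; 2]; dec [:: 2; 0; 7; 5; 2]; dec [:: 2; 7; 5; 2]; dec [:: 6; 4; 3]; dec [:: 5; 6; 5; 2]; dec [:: 6; 4; 2]; dec [:: 7; 3; 5; 0; 2]; dec [:: 6; 5; 0; 2]; dec [:: 5; 7; 3; 5; 0; 2]; dec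 [:: 6; 3; 5; 0; 2]; dec [:: 4; 2; 0; 7; 5; 2]; dec [:: 6; 4; 0; 2]; dec [:: 5; 6; 5; 3]; dec [:: 5; 2; 7; 5; 2]; dec [:: 6; 2; 5; 2]; dec [:: 3; 5; 6; 5; 3]; dec [:: 3; 5; 6; 5; 2]; dec [:: 5; 6; 2; 5; 2]; dec [:: 4; 2; 7; 5; 2]; dec [:: 2; 5; 6; 5; 2]; dec [:: 6; 5; 6; 2; 5; 2]; dec [:: 0; 3; 5; 6; 5; 3]].
Definition cg_53 : seq word := [:: dec [:: 0]; dec [:: 4]; dec [:: 6]; dec [:: 2; 0; 0; 2]].
Definition cc_53 : seq (seq tok) := [:: [:: ]; [:: TRel (dec [:: ]) false 0 2 false]; [:: TRel (dec [:: ]) false 0 3 false]; [:: TRel (dec [:: 2; 0]) true 0 0 true; TRel (dec [:: ]) true 0 0 false]].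
Definition ec_53 : seq (nat * nat * seq tok) :=
  [:: (0, 0, [:: TC 0 true]);
  (0, 2, [:: TC 1 true]);
  (0, 3, [:: TC 2 true]);
  (0, 1, [:: ]);
  (1, 3, [:: TRel (dec [:: 3]) false 1 3 false; TRef 0 1 true; TRef 0 3 true; TRef 0 1 false]);
  (3, 1, [:: ]);
  (3, 3, [:: TRef 3 1 false; TRel (dec [:: ]) false 1 3 true; TRef 0 3 true; TRef 3 1 true]);
  (1, 0, [:: ]);
  (2, 0, [:: TRef 3 1 false; TC 3 true; TRef 0 1 false; TRef 1 0 false]);
  (2, 1, [:: TRef 2 0 false; TRef 3 1 false; TRel (dec [:: ]) true 0 0 false; TRef 0 0 true; TRef 3 1 true; TRef 2 0 true]);
  (3, 0, [:: TX (dec [:: 3]) true; TRef 1 0 false; TRef 2 0 false]);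
  (2, 3, [:: TRef 2 0 false; TRel (dec [:: 2]) false 0 3 true; TRef 3 3 true; TRef 2 0 true]);
  (1, 1, [:: TRef 3 0 false; TRel (dec [:: 3]) true 0 0 true; TRef 0 1 true; TRef 0 0 true; TRef 3 1 true; TRef 3 0 false]);
  (1, 2, [:: ]);
  (8, 1, [:: TRel (dec [:: 3; 5]) true 1 0 true; TRef 1 2 true; TRef 0 1 true; TRef 0 2 true; TRef 0 1 false; TRef 1 2 false]);
  (5, 2, [:: ]);
  (2, 2, [:: ]);
  (8, 0, [:: TRel (dec [:: 3; 1; 5]) false 0 2 true; TRef 2 2 true; TRef 1 0 true; TRef 1 2 false]);
  (9, 2, [:: ]);
  (5, 0, [:: TRef 9 2 false; TRel (dec [:: 3; 1]) false 0 2 false; TRef 1 0 true; TRef 5 2 true]);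
  (3, 2, [:: ]);
  (6, 1, [:: TRef 5 2 false; TRel (dec [:: 3]) true 1 0 false; TRef 0 1 true; TRef 0 2 true; TRef 3 1 true; TRef 3 2 false]);
  (6, 0, [:: TRel (dec [:: 3; 5]) false 0 2 true; TRef 1 2 true; TRef 3 0 true; TRef 3 2 false]);
  (12, 0, [:: TRef 6 0 false; TX (dec [:: 3; 5]) true; TRef 8 0 false]);
  (8, 2, [:: TRel (dec [:: 3; 4]) true 1 0 false; TRef 6 1 true; TRef 3 2 true; TRef 1 1 true; TRef 1 2 false; TRef 8 1 false]);
  (9, 1, [:: TRel (dec [:: 3; 1; 5]) true 0 0 false; TRef 8 0 true; TRef 8 1 true; TRef 6 0 true; TRef 6 1 false; TRef 5 0 false]);
  (12, 2, [:: TRef 9 1 false; TRel (dec [:: 3; 1; 5]) true 1 0 true; TRef 2 2 true; TRef 2 1 true; TRef 9 2 true; TRef 9 1 false]);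
  (4, 2, [:: ]);
  (4, 1, [:: TRef 4 2 false; TRef 3 1 false; TRel (dec [:: ]) true 1 0 true; TRef 0 2 true; TRef 3 1 true; TRef 4 2 true]);
  (4, 0, [:: TRef 5 2 false; TRel (dec [:: 3]) false 0 2 false; TRef 3 0 true; TRef 4 2 true]);
  (9, 0, [:: TRef 4 2 false; TRel (dec [:: 2]) false 0 2 false; TRef 2 0 true; TRef 9 2 true]);
  (6, 2, [:: TRef 4 1 false; TRef 4 2 false; TRel (dec [:: 2]) true 1 0 false; TRef 1 1 true; TRef 5 2 true; TRef 6 1 true]);
  (4, 3, [:: ]);
  (15, 1, [:: TRel (dec [:: 2; 4; 7]) false 1 3 true; TRef 4 3 true; TRef 4 1 true; TRef 4 3 false]);
  (13, 3, [:: ]);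
  (13, 2, [:: TRef 13 3 false; TRef 4 2 false; TRel (dec [:: 2]) true 2 0 true; TRef 3 3 true; TRef 4 2 true; TRef 13 3 true]);
  (13, 1, [:: TRef 13 3 false; TRel (dec [:: 2; 4]) false 1 3 false; TRef 4 1 true; TRef 13 3 true]);
  (5, 1, [:: ]);
  (14, 0, [:: TRel (dec [:: 3; 4; 3]) true 0 0 true; TRef 5 1 true; TRef 4 0 true; TRef 4 1 true; TRef 4 0 false; TRef 5 1 false]);
  (14, 2, [:: TRel (dec [:: 3; 4; 3]) true 1 0 false; TRef 5 1 true; TRef 8 2 true; TRef 8 1 true; TRef 8 2 false; TRef 5 1 false]);
  (14, 1, [:: TRel (dec [:: 2; 5]) true 0 0 false; TRef 12 0 true; TRef 9 1 true; TRef 5 0 true; TRef 5 1 false; TRef 14 0 false]);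
  (5, 3, [:: ]);
  (15, 0, [:: TRel (dec [:: 3; 4; 7]) false 0 3 true; TRef 5 3 true; TRef 4 0 true; TRef 4 3 false]);
  (7, 3, [:: ]);
  (7, 2, [:: TRef 7 3 false; TRef 5 2 false; TRel (dec [:: 3]) true 2 0 true; TRef 1 3 true; TRef 5 2 true; TRef 7 3 true]);
  (13, 0, [:: TRef 7 3 false; TRel (dec [:: 3; 4]) false 0 3 false; TRef 4 0 true; TRef 13 3 true]);
  (6, 3, [:: ]);
  (21, 1, [:: TRel (dec [:: 3; 4; 7]) false 1 3 true; TRef 5 3 true; TRef 6 1 true; TRef 6 3 false]);
  (21, 2, [:: TRel (dec [:: 2; 5; 7]) true 2 0 true; TRef 6 3 true; TRef 3 2 true; TRef 3 3 true; TRef 3 2 false; TRef 6 3 false]);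
  (16, 3, [:: ]);
  (16, 1, [:: TRef 7 3 false; TRel (dec [:: 3; 4]) false 1 3 false; TRef 6 1 true; TRef 16 3 true]);
  (15, 2, [:: TRef 16 3 false; TRel (dec [:: 2; 5]) true 2 0 false; TRef 3 2 true; TRef 3 3 true; TRef 4 2 true; TRef 4 3 false]);
  (15, 3, [:: TRef 13 2 false; TRef 13 3 false; TRel (dec [:: 2; 4]) true 2 0 false; TRef 6 2 true; TRef 16 3 true; TRef 15 2 true]);
  (17, 3, [:: TRel (dec [:: 3; 4; 6]) false 0 3 false; TRef 13 0 true; TRef 15 3 true; TRef 15 0 false]);
  (21, 3, [:: TRef 16 1 false; TRel (dec [:: 3; 4; 6]) false 1 3 true; TRef 17 3 true; TRef 21 1 true]);
  (7, 0, [:: ]);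
  (11, 3, [:: TRel (dec [:: 3; 1; 4]) false 0 3 false; TRef 5 0 true; TRef 7 3 true; TRef 7 0 false]);
  (11, 0, [:: TRef 13 3 false; TRel (dec [:: 2; 4]) false 0 3 false; TRef 9 0 true; TRef 11 3 true]);
  (11, 2, [:: TRef 11 0 false; TRel (dec [:: 2; 4; 6]) false 0 2 true; TRef 13 2 true; TRef 11 0 true]);
  (7, 1, [:: ]);
  (20, 3, [:: TRel (dec [:: 3; 4; 3]) false 1 3 false; TRef 5 1 true; TRef 7 3 true; TRef 7 1 false]);
  (20, 0, [:: TRel (dec [:: 3; 4; 6; 3]) true 0 0 true; TRef 7 1 true; TRef 13 0 true; TRef 13 1 true; TRef 13 0 false; TRef 7 1 false]);
  (20, 1, [:: TRef 16 3 false; TRel (dec [:: 2; 5]) false 1 3 false; TRef 14 1 true; TRef 20 3 true]);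
  (8, 3, [:: ]);
  (21, 0, [:: TRel (dec [:: 3; 5; 7]) false 0 3 true; TRef 8 3 true; TRef 6 0 true; TRef 6 3 false]);
  (23, 1, [:: TRel (dec [:: 3; 5; 7]) false 1 3 true; TRef 8 3 true; TRef 8 1 true; TRef 8 3 false]);
  (23, 2, [:: TRel (dec [:: 3; 5; 7]) true 2 0 true; TRef 8 3 true; TRef 1 2 true; TRef 1 3 true; TRef 1 2 false; TRef 8 3 false]);
  (18, 3, [:: ]);
  (16, 0, [:: TRef 18 3 false; TRel (dec [:: 3; 5]) false 0 3 false; TRef 6 0 true; TRef 16 3 true]);
  (18, 1, [:: TRef 18 3 false; TRel (dec [:: 3; 5]) false 1 3 false; TRef 8 1 true; TRef 18 3 true]);
  (17, 2, [:: TRef 18 3 false; TRel (dec [:: 3; 5]) true 2 0 false; TRef 1 2 true; TRef 1 3 true; TRef 5 2 true; TRef 5 3 false]);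
  (23, 3, [:: TRel (dec [:: 3; 5; 6]) false 0 3 false; TRef 16 0 true; TRef 21 3 true; TRef 21 0 false]);
  (10, 1, [:: ]);
  (10, 2, [:: TRef 10 1 false; TRef 9 2 false; TRel (dec [:: 3; 1]) true 1 0 false; TRef 2 1 true; TRef 9 2 true; TRef 10 1 true]);
  (12, 1, [:: TRef 10 2 false; TRef 10 1 false; TRel (dec [:: 3; 1; 4]) true 1 0 true; TRef 12 2 true; TRef 9 1 true; TRef 12 2 true]);
  (10, 0, [:: TRef 10 1 false; TRef 9 0 false; TRel (dec [:: 2; 4]) true 0 0 true; TRef 4 1 true; TRef 9 0 true; TRef 10 1 true]);
  (9, 3, [:: ]);
  (25, 0, [:: TRel (dec [:: 2; 4; 7]) false 0 3 true; TRef 4 3 true; TRef 9 0 true; TRef 9 3 false]);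
  (17, 0, [:: TRef 25 0 false; TX (dec [:: 2; 4; 7]) true; TRef 15 0 false]);
  (25, 3, [:: TRef 11 0 false; TRel (dec [:: 2; 4; 6]) false 0 3 true; TRef 15 3 true; TRef 25 0 true]);
  (10, 3, [:: ]);
  (27, 1, [:: TRel (dec [:: 3; 1; 4; 7]) false 1 3 true; TRef 9 3 true; TRef 10 1 true; TRef 10 3 false]);
  (27, 0, [:: TRel (dec [:: 3; 1; 4; 2; 7]) false 0 3 true; TRef 10 3 true; TRef 10 0 true; TRef 10 3 false]);
  (24, 3, [:: ]);
  (24, 1, [:: TRef 11 3 false; TRel (dec [:: 3; 1; 4]) false 1 3 false; TRef 10 1 true; TRef 24 3 true]);
  (24, 0, [:: TRef 24 1 false; TRef 11 0 false; TRel (dec [:: 2; 4; 6]) true 0 0 true; TRef 13 1 true; TRef 11 0 true; TRef 24 1 true]);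
  (27, 3, [:: TRef 24 1 false; TRel (dec [:: 3; 4; 6; 1]) false 1 3 true; TRef 25 3 true; TRef 27 1 true]);
  (11, 1, [:: ]);
  (19, 3, [:: TRel (dec [:: 3; 1; 5]) false 1 3 false; TRef 9 1 true; TRef 11 3 true; TRef 11 1 false]);
  (25, 2, [:: TRef 19 3 false; TRel (dec [:: 3; 1; 5]) true 2 0 false; TRef 2 2 true; TRef 2 3 true; TRef 9 2 true; TRef 9 3 false]);
  (19, 0, [:: TRef 16 3 false; TRel (dec [:: 2; 5]) false 0 3 false; TRef 12 0 true; TRef 19 3 true]);
  (18, 0, [:: TRef 19 0 false; TX (dec [:: 2; 5; 6]) true; TRef 16 0 false]);
  (19, 1, [:: TRef 24 0 false; TRef 24 1 false; TRel (dec [:: 3; 4; 6; 1]) true 0 0 false; TRef 7 0 true; TRef 16 1 true; TRef 19 0 true]);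
  (24, 2, [:: TRef 27 1 false; TRef 25 2 false; TRel (dec [:: 3; 4; 6; 1; 3]) true 1 0 false; TRef 11 1 true; TRef 11 2 true; TRef 24 1 true]);
  (12, 3, [:: ]);
  (29, 0, [:: TRel (dec [:: 2; 5; 7]) false 0 3 true; TRef 6 3 true; TRef 12 0 true; TRef 12 3 false]);
  (23, 0, [:: TRef 29 0 false; TX (dec [:: 2; 5; 7]) true; TRef 21 0 false]);
  (29, 3, [:: TRef 19 0 false; TRel (dec [:: 2; 5; 6]) false 0 3 true; TRef 21 3 true; TRef 29 0 true]);
  (29, 1, [:: TRef 27 0 false; TRef 27 1 false; TRel (dec [:: 3; 1; 4; 7]) true 0 0 false; TRef 17 0 true; TRef 21 1 true; TRef 29 0 true]);
  (25, 1, [:: TRef 29 3 false; TRel (dec [:: 3; 4; 6; 1; 3]) false 1 3 false; TRef 11 1 true; TRef 25 3 true]);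
  (29, 2, [:: TRef 29 3 false; TRel (dec [:: 3; 4; 6; 1; 3]) true 2 0 false; TRef 25 2 true; TRef 9 3 true; TRef 12 2 true; TRef 12 3 false]);
  (14, 3, [:: ]);
  (32, 1, [:: TRel (dec [:: 2; 5; 7]) false 1 3 true; TRef 6 3 true; TRef 14 1 true; TRef 14 3 false]);
  (32, 3, [:: TRef 20 1 false; TRel (dec [:: 2; 5; 6]) false 1 3 true; TRef 21 3 true; TRef 32 1 true]);
  (32, 0, [:: TRef 32 3 false; TRel (dec [:: 3; 4; 6; 3]) false 0 3 false; TRef 20 0 true; TRef 32 3 true]);
  (17, 1, [:: TRef 32 3 false; TRel (dec [:: 3; 4; 6; 3]) false 1 3 false; TRef 7 1 true; TRef 17 3 true]);
  (30, 2, [:: ]);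
  (30, 3, [:: TRef 30 2 false; TRef 15 3 false; TRel (dec [:: 2; 4; 6]) true 2 0 false; TRef 13 2 true; TRef 15 3 true; TRef 30 2 true]);
  (16, 2, [:: TRef 30 3 false; TRef 30 2 false; TRel (dec [:: 2; 4; 7]) true 2 0 true; TRef 4 3 true; TRef 6 2 true; TRef 16 3 true]);
  (22, 2, [:: ]);
  (30, 0, [:: TRef 22 2 false; TRel (dec [:: 3; 4; 7]) false 0 2 false; TRef 15 0 true; TRef 30 2 true]);
  (22, 3, [:: TRef 22 2 false; TRef 17 3 false; TRel (dec [:: 3; 4; 6]) true 2 0 false; TRef 7 2 true; TRef 17 3 true; TRef 22 2 true]);
  (18, 2, [:: TRel (dec [:: 3; 4; 7; 4]) false 0 2 false; TRef 30 0 true; TRef 16 2 true; TRef 16 0 false]);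
  (19, 2, [:: ]);
  (28, 0, [:: TRel (dec [:: 2; 4; 7; 4]) false 0 2 true; TRef 16 2 true; TRef 19 0 true; TRef 19 2 false]);
  (28, 3, [:: TRef 28 0 false; TRel (dec [:: 2; 4; 7; 4]) false 0 3 true; TRef 30 3 true; TRef 28 0 true]);
  (22, 0, [:: TRef 28 0 false; TX (dec [:: 2; 4; 7; 4]) true; TRef 30 0 false]);
  (28, 1, [:: TRel (dec [:: 3; 4; 6; 1; 3; 5]) true 1 0 true; TRef 19 2 true; TRef 11 1 true; TRef 11 2 true; TRef 11 1 false; TRef 19 2 false]);
  (28, 2, [:: TRef 25 0 false; TRel (dec [:: 2; 4; 7]) false 0 2 true; TRef 30 2 true; TRef 28 0 true]);
  (20, 2, [:: ]);
  (36, 0, [:: TRel (dec [:: 3; 4; 6; 3; 5]) false 0 2 true; TRef 20 2 true; TRef 20 0 true; TRef 20 2 false]);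
  (36, 1, [:: TRel (dec [:: 3; 4; 6; 3; 5]) true 1 0 true; TRef 20 2 true; TRef 7 1 true; TRef 7 2 true; TRef 7 1 false; TRef 20 2 false]);
  (31, 2, [:: ]);
  (31, 3, [:: TRef 31 2 false; TRef 20 3 false; TRel (dec [:: 3; 4; 3]) true 2 0 false; TRef 14 2 true; TRef 20 3 true; TRef 31 2 true]);
  (30, 1, [:: TRef 31 2 false; TRef 20 1 false; TRel (dec [:: 2; 5; 6]) true 1 0 true; TRef 15 2 true; TRef 15 1 true; TRef 30 2 true]);
  (31, 0, [:: TRef 31 2 false; TRel (dec [:: 3; 4; 6; 3]) false 0 2 false; TRef 20 0 true; TRef 31 2 true]);
  (36, 2, [:: TRel (dec [:: 3; 4; 6; 3; 4]) true 1 0 false; TRef 30 1 true; TRef 16 2 true; TRef 20 1 true; TRef 20 2 false; TRef 36 1 false]);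
  (22, 1, [:: ]);
  (37, 3, [:: TRel (dec [:: 3; 4; 7; 4; 3]) false 1 3 false; TRef 22 1 true; TRef 22 3 true; TRef 22 1 false]);
  (37, 2, [:: TRel (dec [:: 3; 4; 7; 4; 3]) true 1 0 false; TRef 22 1 true; TRef 18 2 true; TRef 18 1 true; TRef 18 2 false; TRef 22 1 false]);
  (34, 1, [:: ]);
  (32, 2, [:: TRef 34 1 false; TRef 22 2 false; TRel (dec [:: 3; 4; 7]) true 1 0 false; TRef 21 1 true; TRef 21 2 true; TRef 32 1 true]);
  (34, 3, [:: TRef 34 1 false; TRel (dec [:: 3; 4; 7; 4]) false 1 3 true; TRef 22 3 true; TRef 34 1 true]);
  (34, 0, [:: TRef 34 1 false; TRef 22 0 false; TRel (dec [:: 3; 4; 6; 1; 3; 5]) true 0 0 true; TRef 28 1 true; TRef 22 0 true; TRef 34 1 true]);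
  (37, 1, [:: TRel (dec [:: 3; 4; 7; 4; 2]) true 1 0 true; TRef 32 2 true; TRef 17 1 true; TRef 22 2 true; TRef 22 1 false; TRef 37 2 false]);
  (26, 2, [:: ]);
  (26, 1, [:: TRef 26 2 false; TRef 24 1 false; TRel (dec [:: 3; 4; 6; 1]) true 1 0 true; TRef 11 2 true; TRef 24 1 true; TRef 26 2 true]);
  (26, 3, [:: TRef 26 2 false; TRef 24 3 false; TRel (dec [:: 3; 1; 4; 2]) true 2 0 false; TRef 10 2 true; TRef 24 3 true; TRef 26 2 true]);
  (26, 0, [:: TRef 26 2 false; TRel (dec [:: 3; 1; 4; 2; 6]) false 0 2 false; TRef 24 0 true; TRef 26 2 true]);
  (27, 2, [:: TRef 26 1 false; TRef 26 2 false; TRel (dec [:: 3; 1; 4; 2; 6]) true 1 0 false; TRef 19 1 true; TRef 25 2 true; TRef 27 1 true]);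
  (33, 1, [:: ]);
  (33, 2, [:: TRef 33 1 false; TRef 30 2 false; TRel (dec [:: 2; 4; 7]) true 1 0 false; TRef 15 1 true; TRef 30 2 true; TRef 33 1 true]);
  (33, 3, [:: TRef 33 1 false; TRel (dec [:: 2; 4; 7; 4]) false 1 3 true; TRef 30 3 true; TRef 33 1 true]);
  (37, 0, [:: TRef 33 1 false; TRel (dec [:: 2; 4; 7; 4]) true 0 0 false; TRef 28 0 true; TRef 28 1 true; TRef 22 0 true; TRef 22 1 false]);
  (31, 1, [:: TRef 33 2 false; TRef 33 1 false; TRel (dec [:: 2; 4; 7; 4]) true 1 0 true; TRef 16 2 true; TRef 20 1 true; TRef 31 2 true]);
  (35, 2, [:: ]);
  (35, 1, [:: TRef 35 2 false; TRef 32 1 false; TRel (dec [:: 2; 5; 7]) true 1 0 true; TRef 21 2 true; TRef 32 1 true; TRef 35 2 true]);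
  (36, 3, [:: TRef 35 2 false; TRef 32 3 false; TRel (dec [:: 3; 4; 6; 3]) true 2 0 false; TRef 31 2 true; TRef 31 3 true; TRef 36 2 true]);
  (35, 0, [:: TRef 35 2 false; TRel (dec [:: 3; 4; 3; 7]) false 0 2 false; TRef 32 0 true; TRef 35 2 true]);
  (34, 2, [:: TRef 35 1 false; TRef 35 2 false; TRel (dec [:: 3; 4; 3; 7]) true 1 0 false; TRef 17 1 true; TRef 22 2 true; TRef 34 1 true]);
  (33, 0, [:: ]);
  (39, 0, [:: TX (dec [:: 3; 4; 7; 4; 3]) true; TRef 37 0 false; TRef 33 0 false]);
  (39, 1, [:: TRef 39 0 false; TRef 37 1 false; TRel (dec [:: 3; 4; 7; 4; 2]) true 0 0 false; TRef 34 0 true; TRef 37 1 true; TRef 39 0 true]);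
  (39, 2, [:: TRel (dec [:: 2; 4; 7; 4; 2; 1]) false 0 2 false; TRef 33 0 true; TRef 33 2 true; TRef 33 0 false]);
  (39, 3, [:: TRel (dec [:: 2; 4; 7; 4; 2; 1]) false 0 3 false; TRef 33 0 true; TRef 33 3 true; TRef 33 0 false]);
  (35, 3, [:: ]);
  (38, 0, [:: TRel (dec [:: 3; 4; 3; 7; 4; 7]) false 0 3 true; TRef 35 3 true; TRef 35 0 true; TRef 35 3 false]);
  (38, 1, [:: TRel (dec [:: 3; 4; 3; 7; 4; 7]) false 1 3 true; TRef 35 3 true; TRef 35 1 true; TRef 35 3 false]);
  (38, 2, [:: TRel (dec [:: 3; 4; 3; 7; 4; 7]) true 2 0 true; TRef 35 3 true; TRef 34 2 true; TRef 34 3 true; TRef 34 2 false; TRef 35 3 false]);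
  (38, 3, [:: TRel (dec [:: 3; 4; 6; 3; 5]) true 2 0 false; TRef 20 2 true; TRef 32 3 true; TRef 35 2 true; TRef 35 3 false; TRef 38 2 false])].
Lemma ok_53 : all_ok 5 3 40 tbl_53 tbi_53 A_53 6%:Z ts_53 cg_53 cc_53 ec_53.
Proof. vm_compute. reflexivity. Qed.

Local Close Scope ring_scope.

Theorem theorem4p1 (n m r : nat) :
  (n, m, r) \in [:: (3, 3, 4); (3, 4, 6); (3, 5, 12); (4, 3, 12); (5, 3, 40)]%N ->
  H1_normal_closure_free_of_rank n m r.
Proof.
rewrite !inE => H.
case/orP: H => [/eqP [-> -> ->]|H]; first exact: (generic_ok ok_33).
case/orP: H => [/eqP [-> -> ->]|H]; first exact: (generic_ok ok_34).
case/orP: H => [/eqP [-> -> ->]|H]; first exact: (generic_ok ok_35).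
case/orP: H => [/eqP [-> -> ->]|H]; first exact: (generic_ok ok_43).
move/eqP: H => [-> -> ->]; exact: (generic_ok ok_53).
Qed.
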